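(* Let $d>0$, $u>0$, $K_z>0$, $K_x>0$, $k>0$, $\sigma>0$, $l>0$, $\rho\ge 0$, and let $S:\mathbb{R}\to\mathbb{R}$ be a smooth odd saturating function with $S(0)=0$ and $S'(0)=1$. Let $\eta(z)=\exp(-z^2/(2\sigma^2))$ and consider, with bias $b=0$, the planar system $$\dot z = -d\,z + u\,S(z) + b - K_z\,\eta(z)\,(z-x),\qquad \dot x = (1-\eta(z))\,K_x\!\left(\tfrac{\rho}{l}\tanh(kz) - x\right) - \eta(z)\,(x-z).$$ Set $u^*=d$. Then the equilibrium $(z,x)=(0,0)$ is locally exponentially stable for $0<u<u^*$ and unstable for $u>u^*$.
   Context: This system models an agent choosing between two spatially separated tasks: $z$ is its opinion (preference, $z>0$ favoring task 1, $z<0$ task 2), $x$ its horizontal position, $d$ a damping coefficient, $u$ an attention gain, $b$ a bias, $K_z$ a coupling weight, $K_x$ a velocity gain. *)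

(* Defs.v *)
From Stdlib Require Import Reals.
From Coquelicot Require Import Coquelicot.
Open Scope R_scope.

Definition smooth (S : R -> R) : Prop :=
  forall (n : nat) (x : R), ex_derive (Derive_n S n) x.

Definition odd_fun (S : R -> R) : Prop := forall x, S (- x) = - S x.

Definition saturating (S : R -> R) : Prop :=
  (exists B, forall x, Rabs (S x) <= B) /\ (forall x y, x <= y -> S x <= S y).

Definition eta (sigma z : R) : R := exp (- (z ^ 2) / (2 * sigma ^ 2)).

Definition fz (d u b Kz sigma : R) (S : R -> R) (z x : R) : R :=
  - d * z + u * S z + b - Kz * eta sigma z * (z - x).

Definition fx (Kx k sigma l rho : R) (z x : R) : R :=
  (1 - eta sigma z) * Kx * (rho / l * tanh (k * z) - x) - eta sigma z * (x - z).

Definition nrm (z x : R) : R := sqrt (z ^ 2 + x ^ 2).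

Definition is_sol (d u b Kz Kx k sigma l rho : R) (S : R -> R)
    (T : R) (zt xt : R -> R) : Prop :=
  filterlim zt (at_right 0) (locally (zt 0)) /\
  filterlim xt (at_right 0) (locally (xt 0)) /\
  forall t, 0 < t < T ->
    is_derive zt t (fz d u b Kz sigma S (zt t) (xt t)) /\
    is_derive xt t (fx Kx k sigma l rho (zt t) (xt t)).

Definition loc_exp_stable (d u b Kz Kx k sigma l rho : R) (S : R -> R) : Prop :=
  exists delta M lam : R, 0 < delta /\ 0 < M /\ 0 < lam /\
    forall (T : R) (zt xt : R -> R),
      is_sol d u b Kz Kx k sigma l rho S T zt xt ->
      nrm (zt 0) (xt 0) < delta ->
      forall t, 0 <= t < T ->
        nrm (zt t) (xt t) <= M * exp (- lam * t) * nrm (zt 0) (xt 0).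

Definition lyap_stable (d u b Kz Kx k sigma l rho : R) (S : R -> R) : Prop :=
  forall eps, 0 < eps -> exists delta, 0 < delta /\
    forall (T : R) (zt xt : R -> R),
      is_sol d u b Kz Kx k sigma l rho S T zt xt ->
      nrm (zt 0) (xt 0) < delta ->
      forall t, 0 <= t < T -> nrm (zt t) (xt t) < eps.

Definition unstable (d u b Kz Kx k sigma l rho : R) (S : R -> R) : Prop :=
  ~ lyap_stable d u b Kz Kx k sigma l rho S.

(* Main.v *)
Require Import Defs.
From Stdlib Require Import Reals Lra Psatz.
From Coquelicot Require Import Coquelicot.
Open Scope R_scope.

Lemma exp_mul_opp y : exp y * exp (- y) = 1.
Proof. rewrite <- exp_plus. replace (y + - y) with 0 by ring. apply exp_0. Qed.

Lemma tanh_bound y : Rabs (tanh y) <= 1.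
Proof.
  unfold tanh, sinh, cosh.
  pose proof (exp_pos y). pose proof (exp_pos (-y)).
  assert (Hc : 0 < (exp y + exp (- y)) / 2) by lra.
  rewrite Rabs_div by lra. rewrite (Rabs_right ((exp y + exp (- y)) / 2)) by lra.
  apply Rmult_le_reg_r with ((exp y + exp (- y)) / 2); auto.
  unfold Rdiv at 1. rewrite Rmult_assoc, Rinv_l, Rmult_1_r by lra.
  apply Rabs_le; lra.
Qed.

Lemma is_derive_tanhk k z :
  is_derive (fun z => tanh (k * z)) z
    (k * 4 / (exp (k*z) + exp (-(k*z)))^2).
Proof.
  unfold tanh, sinh, cosh.
  pose proof (exp_pos (k*z)). pose proof (exp_pos (-(k*z))).
  pose proof (exp_mul_opp (k*z)).
  auto_derive. lra.
  field_simplify; try lra.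
  set (E := exp (k*z)) in *. set (F := exp (-(k*z))) in *.
  replace (16 * k * E * F) with (16 * k) by (rewrite Rmult_assoc, H1; ring).
  field. split; nra.
Qed.

Lemma deriv_lip (h h' : R -> R) (r L : R) :
  (forall x, Rabs x <= r -> is_derive h x (h' x)) ->
  (forall x, Rabs x <= r -> Rabs (h' x) <= L) ->
  forall a b, Rabs a <= r -> Rabs b <= r -> Rabs (h a - h b) <= L * Rabs (a - b).
Proof.
  intros Hd HL a b Ha Hb.
  assert (Hin : forall x, Rmin b a <= x <= Rmax b a -> Rabs x <= r).
  { intros x Hx. apply Rabs_le. apply Rabs_le_between in Ha. apply Rabs_le_between in Hb.
    unfold Rmin, Rmax in Hx; destruct (Rle_dec b a); lra. }
  destruct (MVT_gen h b a h') as [c [Hc Heq]].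
  - intros x Hx. apply Hd, Hin. lra.
  - intros x Hx. apply continuity_pt_filterlim. apply (ex_derive_continuous (K:=R_AbsRing) (V:=R_NormedModule)).
    eexists. apply Hd, Hin; auto.
  - rewrite Heq, Rabs_mult. rewrite (Rabs_minus_sym a b).
    apply Rmult_le_compat_r. apply Rabs_pos. apply HL, Hin; auto.
Qed.

Definition LB1 (r : R) (h : R -> R) : Prop :=
  exists L B, 0 <= L /\ 0 <= B /\ forall a a', Rabs a <= r -> Rabs a' <= r ->
    Rabs (h a) <= B /\ Rabs (h a - h a') <= L * Rabs (a - a').

Definition LB2 (r : R) (f : R -> R -> R) : Prop :=
  exists L B, 0 <= L /\ 0 <= B /\ forall a b a' b', Rabs a <= r -> Rabs b <= r ->
    Rabs a' <= r -> Rabs b' <= r ->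
    Rabs (f a b) <= B /\ Rabs (f a b - f a' b') <= L * (Rabs (a - a') + Rabs (b - b')).

Lemma LB1_deriv (h h' : R -> R) (r L : R) : 0 <= r ->
  (forall x, Rabs x <= r -> is_derive h x (h' x)) ->
  (forall x, Rabs x <= r -> Rabs (h' x) <= L) -> LB1 r h.
Proof.
  intros Hr Hd HL.
  assert (HL0 : 0 <= L). { eapply Rle_trans. apply Rabs_pos. apply (HL 0). rewrite Rabs_R0; lra. }
  exists L, (Rabs (h 0) + L * r). split; auto. split.
  { pose proof (Rabs_pos (h 0)). nra. }
  intros a a' Ha Ha'. split.
  - assert (H0 : Rabs 0 <= r) by (rewrite Rabs_R0; lra).
    pose proof (deriv_lip h h' r L Hd HL a 0 Ha H0).
    rewrite Rminus_0_r in H.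
    pose proof (Rabs_triang_inv (h a) (h 0)). nra.
  - apply (deriv_lip h h' r L); auto.
Qed.

Lemma LB2_const r c : LB2 r (fun _ _ => c).
Proof.
  exists 0, (Rabs c). split; [lra|]. split; [apply Rabs_pos|].
  intros. split; [lra|]. rewrite Rminus_eq_0, Rabs_R0.
  pose proof (Rabs_pos (a - a')). pose proof (Rabs_pos (b - b')). nra.
Qed.

Lemma LB2_fst r : 0 <= r -> LB2 r (fun a _ => a).
Proof.
  intros Hr. exists 1, r. split; [lra|]. split; [lra|].
  intros. split; auto. pose proof (Rabs_pos (b - b')). lra.
Qed.

Lemma LB2_snd r : 0 <= r -> LB2 r (fun _ b => b).
Proof.
  intros Hr. exists 1, r. split; [lra|]. split; [lra|].
  intros. split; auto. pose proof (Rabs_pos (a - a')). lra.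
Qed.

Lemma LB2_lift r h : LB1 r h -> LB2 r (fun a _ => h a).
Proof.
  intros [L [B [HL [HB H]]]]. exists L, B. split; auto. split; auto.
  intros a b a' b' Ha Hb Ha' Hb'. destruct (H a a' Ha Ha') as [H1 H2].
  split; auto. pose proof (Rabs_pos (b - b')). nra.
Qed.

Lemma LB2_plus r f g : LB2 r f -> LB2 r g -> LB2 r (fun a b => f a b + g a b).
Proof.
  intros [L1 [B1 [HL1 [HB1 H1]]]] [L2 [B2 [HL2 [HB2 H2]]]].
  exists (L1 + L2), (B1 + B2). split; [lra|]. split; [lra|].
  intros a b a' b' Ha Hb Ha' Hb'.
  destruct (H1 a b a' b' Ha Hb Ha' Hb') as [F1 F2].
  destruct (H2 a b a' b' Ha Hb Ha' Hb') as [G1 G2].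
  split.
  - eapply Rle_trans. apply Rabs_triang. lra.
  - replace (f a b + g a b - (f a' b' + g a' b')) with ((f a b - f a' b') + (g a b - g a' b')) by ring.
    eapply Rle_trans. apply Rabs_triang. lra.
Qed.

Lemma LB2_opp r f : LB2 r f -> LB2 r (fun a b => - f a b).
Proof.
  intros [L1 [B1 [HL1 [HB1 H1]]]]. exists L1, B1. split; auto. split; auto.
  intros a b a' b' Ha Hb Ha' Hb'.
  destruct (H1 a b a' b' Ha Hb Ha' Hb') as [F1 F2]. split.
  - rewrite Rabs_Ropp; auto.
  - replace (- f a b - - f a' b') with (- (f a b - f a' b')) by ring. rewrite Rabs_Ropp; auto.
Qed.

Lemma LB2_minus r f g : LB2 r f -> LB2 r g -> LB2 r (fun a b => f a b - g a b).
Proof. intros. apply (LB2_plus r f (fun a b => - g a b)); auto. apply LB2_opp; auto. Qed.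

Lemma LB2_mult r f g : LB2 r f -> LB2 r g -> LB2 r (fun a b => f a b * g a b).
Proof.
  intros [L1 [B1 [HL1 [HB1 H1]]]] [L2 [B2 [HL2 [HB2 H2]]]].
  exists (B1 * L2 + B2 * L1), (B1 * B2). split; [nra|]. split; [nra|].
  intros a b a' b' Ha Hb Ha' Hb'.
  destruct (H1 a b a' b' Ha Hb Ha' Hb') as [F1 F2].
  destruct (H2 a b a' b' Ha Hb Ha' Hb') as [G1 G2].
  destruct (H2 a' b' a b Ha' Hb' Ha Hb) as [G1' _].
  split.
  - rewrite Rabs_mult. apply Rmult_le_compat; auto; apply Rabs_pos.
  - replace (f a b * g a b - f a' b' * g a' b') with
      (f a b * (g a b - g a' b') + g a' b' * (f a b - f a' b')) by ring.
    eapply Rle_trans. apply Rabs_triang. rewrite !Rabs_mult.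
    set (D := Rabs (a - a') + Rabs (b - b')).
    assert (Rabs (f a b) * Rabs (g a b - g a' b') <= B1 * (L2 * D)).
    { apply Rmult_le_compat; auto; apply Rabs_pos. }
    assert (Rabs (g a' b') * Rabs (f a b - f a' b') <= B2 * (L1 * D)).
    { apply Rmult_le_compat; auto; apply Rabs_pos. }
    nra.
Qed.

Lemma eta_pos s z : 0 < eta s z.
Proof. unfold eta. apply exp_pos. Qed.

Lemma eta_le1 s z : 0 < s -> eta s z <= 1.
Proof.
  intros Hs. unfold eta. rewrite <- exp_0.
  destruct (Req_dec (- z ^ 2 / (2 * s ^ 2)) 0) as [E|E]. rewrite E; lra.
  left. apply exp_increasing.
  assert (0 < 2 * s ^ 2) by nra.
  assert (0 <= z ^ 2) by nra.
  assert (- z ^ 2 / (2 * s ^ 2) <= 0).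
  { assert (0 <= z ^ 2 / (2 * s ^ 2)) by (apply Rdiv_le_0_compat; auto).
    replace (- z ^ 2 / (2 * s ^ 2)) with (- (z ^ 2 / (2 * s ^ 2))) by (unfold Rdiv; ring). lra. }
  lra.
Qed.

Lemma one_minus_eta s z : 0 < s -> 0 <= 1 - eta s z <= z ^ 2 / (2 * s ^ 2).
Proof.
  intros Hs. split. pose proof (eta_le1 s z Hs); lra.
  pose proof (exp_ineq1_le (- z ^ 2 / (2 * s ^ 2))). unfold eta.
  unfold Rdiv in *. lra.
Qed.

Lemma is_derive_eta s z : 0 < s -> is_derive (eta s) z (- z / s ^ 2 * eta s z).
Proof.
  intros Hs. unfold eta. auto_derive; auto.
  match goal with |- _ * exp ?a = _ => replace a with (- z ^ 2 / (2 * s ^ 2)) by (field; lra) end.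
  field; lra.
Qed.

Lemma LB1_eta s r : 0 < s -> 0 <= r -> LB1 r (eta s).
Proof.
  intros Hs Hr. apply (LB1_deriv _ (fun z => - z / s ^ 2 * eta s z) r (r / s ^ 2)); auto.
  - intros; apply is_derive_eta; auto.
  - intros x Hx. pose proof (eta_pos s x). pose proof (eta_le1 s x Hs).
    assert (0 < s ^ 2) by nra.
    rewrite Rabs_mult, (Rabs_right (eta s x)) by lra.
    unfold Rdiv. rewrite Rabs_mult, Rabs_Ropp, (Rabs_right (/ s ^ 2)).
    2: left; apply Rinv_0_lt_compat; auto.
    assert (0 < / s ^ 2) by (apply Rinv_0_lt_compat; auto).
    pose proof (Rabs_pos x).
    assert (0 <= Rabs x * / s ^ 2) by nra.
    apply Rle_trans with (Rabs x * / s ^ 2). nra. nra.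
Qed.

Lemma LB1_tanhk k r : 0 <= k -> 0 <= r -> LB1 r (fun z => tanh (k * z)).
Proof.
  intros Hk Hr. apply (LB1_deriv _ (fun z => k * 4 / (exp (k*z) + exp (-(k*z)))^2) r k); auto.
  - intros; apply is_derive_tanhk.
  - intros x _. pose proof (exp_pos (k*x)). pose proof (exp_pos (-(k*x))).
    pose proof (exp_mul_opp (k*x)).
    set (E := exp (k*x)) in *. set (F := exp (-(k*x))) in *.
    assert (HE : 4 <= (E + F) ^ 2).
    { replace ((E + F) ^ 2) with ((E - F) ^ 2 + 4 * (E * F)) by ring.
      rewrite H1. pose proof (pow2_ge_0 (E - F)). lra. }
    rewrite Rabs_right.
    2: { apply Rle_ge. unfold Rdiv. apply Rmult_le_pos. lra. left. apply Rinv_0_lt_compat. lra. }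
    apply Rmult_le_reg_r with ((E + F) ^ 2). lra.
    unfold Rdiv. rewrite Rmult_assoc, Rinv_l by lra. nra.
Qed.

Lemma LB1_S (S : R -> R) r : 0 <= r -> smooth S -> LB1 r S.
Proof.
  intros Hr HS.
  destruct (continuity_ab_maj (fun x => Rabs (Derive S x)) (-r) r) as [Mx [HM _]]. lra.
  { intros c _. apply (continuity_pt_comp (Derive S) Rabs). 2: apply Rcontinuity_abs.
    apply continuity_pt_filterlim. apply (ex_derive_continuous (K:=R_AbsRing) (V:=R_NormedModule)).
    apply (HS 1%nat c). }
  apply (LB1_deriv _ (Derive S) r (Rabs (Derive S Mx))); auto.
  - intros x _. apply Derive_correct. apply (HS 0%nat x).
  - intros x Hx. apply HM. apply Rabs_le_between; auto.
Qed.

Lemma LB2_fz d u b Kz sigma S r : 0 < sigma -> 0 <= r -> smooth S ->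
  LB2 r (fz d u b Kz sigma S).
Proof.
  intros Hs Hr HS. unfold fz.
  apply LB2_minus. apply LB2_plus. apply LB2_plus.
  - apply LB2_mult. apply LB2_const. apply LB2_fst; auto.
  - apply LB2_mult. apply LB2_const. apply (LB2_lift r S). apply LB1_S; auto.
  - apply LB2_const.
  - apply LB2_mult. apply LB2_mult. apply LB2_const. apply (LB2_lift r (eta sigma)). apply LB1_eta; auto.
    apply LB2_minus. apply LB2_fst; auto. apply LB2_snd; auto.
Qed.

Lemma LB2_fx Kx k sigma l rho r : 0 < sigma -> 0 <= r -> 0 <= k ->
  LB2 r (fx Kx k sigma l rho).
Proof.
  intros Hs Hr Hk. unfold fx.
  apply LB2_minus. apply LB2_mult. apply LB2_mult.
  - apply LB2_minus. apply LB2_const. apply (LB2_lift r (eta sigma)). apply LB1_eta; auto.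
  - apply LB2_const.
  - apply LB2_minus. apply LB2_mult. apply LB2_const.
    apply (LB2_lift r (fun z => tanh (k * z))). apply LB1_tanhk; auto.
    apply LB2_snd; auto.
  - apply LB2_mult. apply (LB2_lift r (eta sigma)). apply LB1_eta; auto.
    apply LB2_minus. apply LB2_snd; auto. apply LB2_fst; auto.
Qed.

Lemma lip_cont (g : R -> R) K : 0 <= K ->
  (forall t t', Rabs (g t - g t') <= K * Rabs (t - t')) -> forall s, continuous g s.
Proof.
  intros HK Hg s. apply continuity_pt_filterlim.
  intros eps Heps. exists (eps / (K + 1)). split.
  { apply Rdiv_lt_0_compat; lra. }
  intros x [_ Hx]. simpl in *. unfold R_dist in *.
  eapply Rle_lt_trans. apply Hg.
  apply Rle_lt_trans with ((K + 1) * Rabs (x - s)).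
  { pose proof (Rabs_pos (x - s)). nra. }
  apply Rmult_lt_reg_r with (/ (K+1)). apply Rinv_0_lt_compat; lra.
  replace ((K + 1) * Rabs (x - s) * / (K + 1)) with (Rabs (x - s)) by (field; lra).
  exact Hx.
Qed.

Lemma RInt_abs_const (g : R -> R) a b M :
  ex_RInt g a b -> (forall s, Rabs (g s) <= M) -> Rabs (RInt g a b) <= M * Rabs (b - a).
Proof.
  intros He HM. destruct (Rle_dec a b) as [Hab|Hab].
  - rewrite (Rabs_right (b - a)) by lra. rewrite Rmult_comm. apply abs_RInt_le_const; auto.
  - rewrite <- opp_RInt_swap by (apply ex_RInt_swap; auto). change (opp (RInt g b a)) with (- RInt g b a).
    rewrite Rabs_Ropp. rewrite (Rabs_left (b - a)) by lra.
    replace (- (b - a)) with (a - b) by ring. rewrite Rmult_comm.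
    apply abs_RInt_le_const; try lra. apply ex_RInt_swap; auto. intros; auto.
Qed.

Definition clT (T t : R) := Rmax 0 (Rmin T t).

Lemma clT_in T t : 0 <= T -> 0 <= clT T t <= T.
Proof. intros; unfold clT, Rmax, Rmin; repeat destruct Rle_dec; lra. Qed.

Lemma clT_id T t : 0 <= t <= T -> clT T t = t.
Proof. intros; unfold clT, Rmax, Rmin; repeat destruct Rle_dec; lra. Qed.

Lemma clT_lip T t t' : 0 <= T -> Rabs (clT T t - clT T t') <= Rabs (t - t').
Proof. intros; unfold clT, Rmax, Rmin; repeat destruct Rle_dec;
  unfold Rabs; repeat destruct Rcase_abs; lra. Qed.

Lemma exRc (f : R -> R) a b : (forall z, continuous f z) -> ex_RInt f a b.
Proof. intros H. apply (ex_RInt_continuous (V:=R_CompleteNormedModule)). intros; apply H. Qed.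

Lemma cont_expl c lam s : continuous (fun s => c * exp (lam * s)) s.
Proof. apply (ex_derive_continuous (K:=R_AbsRing) (V:=R_NormedModule)). auto_derive; auto. Qed.

Lemma RInt_exp_bound (h : R -> R) c lam t : 0 < lam -> 0 <= t ->
  (forall s, continuous h s) ->
  (forall s, 0 <= s <= t -> Rabs (h s) <= c * exp (lam * s)) ->
  Rabs (RInt h 0 t) <= c * exp (lam * t) / lam.
Proof.
  intros Hl Ht Hc Hb.
  assert (Hc0 : 0 <= c).
  { pose proof (Hb 0 ltac:(lra)). rewrite Rmult_0_r, exp_0 in H. pose proof (Rabs_pos (h 0)). lra. }
  assert (Hex : ex_RInt h 0 t) by (apply exRc; auto).
  eapply Rle_trans. apply abs_RInt_le; auto.
  assert (HI : is_RInt (fun s => c * exp (lam * s)) 0 t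
                 (minus (c * exp (lam * t) / lam) (c * exp (lam * 0) / lam))).
  { apply (is_RInt_derive (fun s => c * exp (lam * s) / lam)).
    - intros x _. auto_derive; auto. field. lra.
    - intros x _. apply cont_expl. }
  eapply Rle_trans. apply RInt_le with (g := fun s => c * exp (lam * s)); auto.
  - apply exRc. intros; apply continuous_Rabs_comp, Hc.
  - eexists; exact HI.
  - intros x Hx. apply Hb; lra.
  - rewrite (is_RInt_unique _ _ _ _ HI). unfold minus, plus, opp; simpl.
    rewrite Rmult_0_r, exp_0. unfold Rdiv.
    assert (0 <= c * 1 * / lam). { apply Rmult_le_pos. lra. left; apply Rinv_0_lt_compat; lra. }
    lra.
Qed.

Definition GLip (G : R -> R -> R) L := forall a b a' b',
  Rabs (G a b - G a' b') <= L * (Rabs (a - a') + Rabs (b - b')).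
Definition Lip1 (f : R -> R) K := forall t t', Rabs (f t - f t') <= K * Rabs (t - t').

Fixpoint pic (G1 G2 : R -> R -> R) (T z0 x0 : R) (n : nat) : (R -> R) * (R -> R) :=
  match n with
  | O => (fun _ => z0, fun _ => x0)
  | S n => let p := pic G1 G2 T z0 x0 n in
     (fun t => z0 + RInt (fun s => G1 (fst p s) (snd p s)) 0 (clT T t),
      fun t => x0 + RInt (fun s => G2 (fst p s) (snd p s)) 0 (clT T t))
  end.

Lemma comp_lip G L f h K : 0 <= L -> 0 <= K -> GLip G L -> Lip1 f K -> Lip1 h K ->
  Lip1 (fun s => G (f s) (h s)) (L * (2 * K)).
Proof.
  intros HL HK HG Hf Hh t t'. eapply Rle_trans. apply HG.
  pose proof (Hf t t'). pose proof (Hh t t'). pose proof (Rabs_pos (t - t')). nra.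
Qed.

Lemma RInt_diff_lip (g : R -> R) M T : 0 <= T -> (forall s, continuous g s) ->
  (forall s, Rabs (g s) <= M) ->
  Lip1 (fun t => RInt g 0 (clT T t)) M.
Proof.
  intros HT Hc HM t t'.
  assert (E : RInt g 0 (clT T t) - RInt g 0 (clT T t') = RInt g (clT T t') (clT T t)).
  { rewrite <- (RInt_Chasles g 0 (clT T t') (clT T t)) by (apply exRc; auto).
    change (plus ?a ?b) with (a + b). ring. }
  rewrite E. eapply Rle_trans. apply RInt_abs_const; auto. apply exRc; auto.
  assert (0 <= M). { eapply Rle_trans. apply Rabs_pos. apply (HM 0). }
  apply Rmult_le_compat_l; auto. apply clT_lip; auto.
Qed.

Lemma pic_lip G1 G2 L M T z0 x0 : 0 <= L -> 0 <= M -> 0 <= T ->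
  GLip G1 L -> GLip G2 L -> (forall a b, Rabs (G1 a b) <= M) -> (forall a b, Rabs (G2 a b) <= M) ->
  forall n, Lip1 (fst (pic G1 G2 T z0 x0 n)) M /\ Lip1 (snd (pic G1 G2 T z0 x0 n)) M.
Proof.
  intros HL HM HT H1 H2 B1 B2 n. induction n as [|n [IH1 IH2]].
  - split; intros t t'; simpl; rewrite Rminus_eq_0, Rabs_R0; pose proof (Rabs_pos (t - t')); nra.
  - simpl. split; intros t t'.
    + replace (z0 + RInt (fun s => G1 (fst (pic G1 G2 T z0 x0 n) s) (snd (pic G1 G2 T z0 x0 n) s)) 0 (clT T t) -
        (z0 + RInt (fun s => G1 (fst (pic G1 G2 T z0 x0 n) s) (snd (pic G1 G2 T z0 x0 n) s)) 0 (clT T t')))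
      with (RInt (fun s => G1 (fst (pic G1 G2 T z0 x0 n) s) (snd (pic G1 G2 T z0 x0 n) s)) 0 (clT T t) -
        RInt (fun s => G1 (fst (pic G1 G2 T z0 x0 n) s) (snd (pic G1 G2 T z0 x0 n) s)) 0 (clT T t')) by ring.
      apply (RInt_diff_lip _ M T); auto.
      apply (lip_cont _ (L * (2 * M))). nra. apply comp_lip; auto.
    + replace (x0 + RInt (fun s => G2 (fst (pic G1 G2 T z0 x0 n) s) (snd (pic G1 G2 T z0 x0 n) s)) 0 (clT T t) -
        (x0 + RInt (fun s => G2 (fst (pic G1 G2 T z0 x0 n) s) (snd (pic G1 G2 T z0 x0 n) s)) 0 (clT T t')))
      with (RInt (fun s => G2 (fst (pic G1 G2 T z0 x0 n) s) (snd (pic G1 G2 T z0 x0 n) s)) 0 (clT T t) -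
        RInt (fun s => G2 (fst (pic G1 G2 T z0 x0 n) s) (snd (pic G1 G2 T z0 x0 n) s)) 0 (clT T t')) by ring.
      apply (RInt_diff_lip _ M T); auto.
      apply (lip_cont _ (L * (2 * M))). nra. apply comp_lip; auto.
Qed.

Lemma exp_ge1 x : 0 <= x -> 1 <= exp x.
Proof. intros. pose proof (exp_ineq1_le x). lra. Qed.

Lemma pic_step_fst G1 G2 T z0 x0 n t : 0 <= t <= T ->
  fst (pic G1 G2 T z0 x0 (S n)) t =
  z0 + RInt (fun s => G1 (fst (pic G1 G2 T z0 x0 n) s) (snd (pic G1 G2 T z0 x0 n) s)) 0 t.
Proof. intros. simpl. rewrite clT_id; auto. Qed.

Lemma pic_step_snd G1 G2 T z0 x0 n t : 0 <= t <= T ->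
  snd (pic G1 G2 T z0 x0 (S n)) t =
  x0 + RInt (fun s => G2 (fst (pic G1 G2 T z0 x0 n) s) (snd (pic G1 G2 T z0 x0 n) s)) 0 t.
Proof. intros. simpl. rewrite clT_id; auto. Qed.

Lemma RInt_sub (f g : R -> R) a b : (forall s, continuous f s) -> (forall s, continuous g s) ->
  RInt f a b - RInt g a b = RInt (fun s => f s - g s) a b.
Proof.
  intros Hf Hg. symmetry. apply (RInt_minus (V:=R_CompleteNormedModule)); apply exRc; auto.
Qed.

Lemma cont_sub (f g : R -> R) s : continuous f s -> continuous g s -> continuous (fun s => f s - g s) s.
Proof. intros. apply (continuous_minus (V:=R_NormedModule)); auto. Qed.

Lemma addsub1 (a b : R) : a + b - a = b. Proof. ring. Qed.
Lemma addsub2 (a b c : R) : a + b - (a + c) = b - c. Proof. ring. Qed.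

Lemma pic_bound G1 G2 L M T z0 x0 : 0 <= L -> 0 <= M -> 0 < T ->
  GLip G1 L -> GLip G2 L -> (forall a b, Rabs (G1 a b) <= M) -> (forall a b, Rabs (G2 a b) <= M) ->
  forall n t, 0 <= t <= T ->
  Rabs (fst (pic G1 G2 T z0 x0 (S n)) t - fst (pic G1 G2 T z0 x0 n) t) +
  Rabs (snd (pic G1 G2 T z0 x0 (S n)) t - snd (pic G1 G2 T z0 x0 n) t)
  <= 2 * M * T * (/2) ^ n * exp ((4 * L + 1) * t).
Proof.
  intros HL HM HT H1 H2 B1 B2.
  pose proof (pic_lip G1 G2 L M T z0 x0 HL HM ltac:(lra) H1 H2 B1 B2) as PL.
  assert (HC : forall G n, GLip G L -> forall s,
     continuous (fun s => G (fst (pic G1 G2 T z0 x0 n) s) (snd (pic G1 G2 T z0 x0 n) s)) s).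
  { intros G n HG s. destruct (PL n). apply (lip_cont _ (L * (2 * M))). nra. apply comp_lip; auto. }
  induction n as [|n IH]; intros t Ht.
  - rewrite pic_step_fst, pic_step_snd by auto. cbn [pic fst snd].
    rewrite !addsub1.
    pose proof (RInt_abs_const (fun _ => G1 z0 x0) 0 t M ltac:(apply exRc; intros; apply continuous_const) ltac:(intros; apply B1)).
    pose proof (RInt_abs_const (fun _ => G2 z0 x0) 0 t M ltac:(apply exRc; intros; apply continuous_const) ltac:(intros; apply B2)).
    rewrite Rminus_0_r, (Rabs_right t) in H, H0 by lra. simpl pow.
    pose proof (exp_ge1 ((4 * L + 1) * t) ltac:(nra)).
    assert (M * t <= M * T) by nra.
    assert (0 <= M * T) by nra.
    assert (2 * M * T <= 2 * M * T * 1 * exp ((4 * L + 1) * t)) by (rewrite Rmult_1_r; nra).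
    lra.
  - rewrite !pic_step_fst, !pic_step_snd by auto.
    set (lam := 4 * L + 1).
    set (c := L * (2 * M * T * (/ 2) ^ n)).
    assert (Hbnd : forall G, GLip G L -> forall s, 0 <= s <= t ->
      Rabs (G (fst (pic G1 G2 T z0 x0 (S n)) s) (snd (pic G1 G2 T z0 x0 (S n)) s) -
            G (fst (pic G1 G2 T z0 x0 n) s) (snd (pic G1 G2 T z0 x0 n) s)) <= c * exp (lam * s)).
    { intros G HG s Hs. eapply Rle_trans. apply HG. unfold c.
      rewrite Rmult_assoc. apply Rmult_le_compat_l; auto. apply IH. lra. }
    assert (Hlam : 0 < lam) by (unfold lam; lra).
    assert (E1 := RInt_exp_bound _ c lam t Hlam ltac:(lra)
      (fun s => cont_sub _ _ s (HC G1 (S n) H1 s) (HC G1 n H1 s)) (Hbnd G1 H1)).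
    assert (E2 := RInt_exp_bound _ c lam t Hlam ltac:(lra)
      (fun s => cont_sub _ _ s (HC G2 (S n) H2 s) (HC G2 n H2 s)) (Hbnd G2 H2)).
    rewrite <- RInt_sub in E1, E2 by (apply HC; auto).
    rewrite !addsub2.
    assert (Hc0 : 0 <= c * exp (lam * t)).
    { unfold c. apply Rmult_le_pos; [|left; apply exp_pos].
      apply Rmult_le_pos; auto. apply Rmult_le_pos; [nra|]. apply pow_le; lra. }
    assert (c * exp (lam * t) / lam * 2 <= 2 * M * T * (/ 2) ^ S n * exp (lam * t)).
    { unfold c. simpl pow.
      apply Rmult_le_reg_r with lam; auto.
      unfold Rdiv. field_simplify; try lra.
      pose proof (exp_pos (lam * t)). pose proof (pow_le (/2) n ltac:(lra)).
      assert (0 <= M * T * (/2)^n * exp (lam * t)) by (apply Rmult_le_pos; [apply Rmult_le_pos; [nra|auto]|lra]).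
      set (P := M * T * (/2)^n * exp (lam * t)) in *.
      replace (4 * L * M * T * (/ 2) ^ n * exp (lam * t)) with (4 * L * P) by (unfold P; ring).
      assert (Hl : lam = 4 * L + 1) by reflexivity. rewrite Hl. nra. }
    fold lam. eapply Rle_trans; [apply Rplus_le_compat; [exact E1 | exact E2] | lra].
Qed.

Lemma deriv_int (g : R -> R) z0 t : (forall s, continuous g s) ->
  is_derive (fun s => z0 + RInt g 0 s) t (g t).
Proof.
  intros Hc.
  evar (l : R). replace (g t) with l.
  apply (is_derive_plus (fun _ => z0) (fun s => RInt g 0 s)). apply is_derive_const.
  apply (is_derive_RInt g _ 0 t). exists (mkposreal 1 Rlt_0_1). intros.
  apply (RInt_correct (V:=R_CompleteNormedModule)). apply exRc; auto. apply Hc.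
  unfold l. unfold plus, zero; simpl. ring.
Qed.

Lemma lim_abs_le (w : nat -> R) (l : R) n B : is_lim_seq w l ->
  (forall m, Rabs (w (m + n)%nat) <= B) -> Rabs l <= B.
Proof.
  intros Hl Hb.
  apply (is_lim_seq_incr_n w n) in Hl.
  apply is_lim_seq_abs in Hl.
  assert (H := is_lim_seq_le _ _ _ _ Hb Hl (is_lim_seq_const B)). simpl in H. exact H.
Qed.

Lemma small_zero X C : (forall n, Rabs X <= C * (/2) ^ n) -> X = 0.
Proof.
  intros H.
  assert (Hl : is_lim_seq (fun n => C * (/2) ^ n) 0).
  { replace (Finite 0) with (Rbar_mult C 0) by (simpl; f_equal; ring).
    apply is_lim_seq_scal_l. apply is_lim_seq_geom. rewrite Rabs_right; lra. }
  assert (H2 := is_lim_seq_le _ _ _ _ H (is_lim_seq_const (Rabs X)) Hl). simpl in H2.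
  pose proof (Rabs_pos X). assert (Rabs X = 0) by lra.
  destruct (Req_dec X 0); auto. exfalso. apply Rabs_no_R0 in H3; auto.
Qed.

Lemma half_pow_le n p : (/2) ^ (n + p) <= (/2) ^ n.
Proof.
  rewrite pow_add. pose proof (pow_le (/2) n ltac:(lra)).
  assert ((/2) ^ p <= 1).
  { induction p. simpl; lra. simpl. pose proof (pow_le (/2) p ltac:(lra)). lra. }
  pose proof (pow_le (/2) p ltac:(lra)). nra.
Qed.

Lemma pic_tail G1 G2 L M T z0 x0 : 0 <= L -> 0 <= M -> 0 < T ->
  GLip G1 L -> GLip G2 L -> (forall a b, Rabs (G1 a b) <= M) -> (forall a b, Rabs (G2 a b) <= M) ->
  forall n p t, 0 <= t <= T ->
  Rabs (fst (pic G1 G2 T z0 x0 (n + p)) t - fst (pic G1 G2 T z0 x0 n) t) +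
  Rabs (snd (pic G1 G2 T z0 x0 (n + p)) t - snd (pic G1 G2 T z0 x0 n) t)
  <= 2 * (2 * M * T * exp ((4 * L + 1) * T)) * ((/2) ^ n - (/2) ^ (n + p)).
Proof.
  intros HL HM HT H1 H2 B1 B2 n p t Ht.
  set (A := 2 * M * T * exp ((4 * L + 1) * T)).
  induction p as [|p IH].
  - rewrite Nat.add_0_r, !Rminus_eq_0, Rabs_R0. lra.
  - pose proof (pic_bound G1 G2 L M T z0 x0 HL HM HT H1 H2 B1 B2 (n + p) t Ht) as Hb.
    rewrite Nat.add_succ_r.
    assert (exp ((4 * L + 1) * t) <= exp ((4 * L + 1) * T)).
    { destruct (Req_dec t T). subst; lra. left. apply exp_increasing. nra. }
    assert (Hb' : Rabs (fst (pic G1 G2 T z0 x0 (S (n + p))) t - fst (pic G1 G2 T z0 x0 (n + p)) t) +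
      Rabs (snd (pic G1 G2 T z0 x0 (S (n + p))) t - snd (pic G1 G2 T z0 x0 (n + p)) t)
      <= A * (/2) ^ (n + p)).
    { eapply Rle_trans. exact Hb. unfold A.
      pose proof (pow_le (/2) (n + p) ltac:(lra)).
      assert (0 <= M * T) by nra.
      replace (2 * M * T * (/ 2) ^ (n + p) * exp ((4 * L + 1) * t)) with
        (2 * (M * T) * (/ 2) ^ (n + p) * exp ((4 * L + 1) * t)) by ring.
      replace (2 * M * T * exp ((4 * L + 1) * T) * (/ 2) ^ (n + p)) with
        (2 * (M * T) * (/ 2) ^ (n + p) * exp ((4 * L + 1) * T)) by ring.
      apply Rmult_le_compat_l; auto. nra. }
    simpl pow in *. 
    pose proof (Rabs_triang (fst (pic G1 G2 T z0 x0 (S (n + p))) t - fst (pic G1 G2 T z0 x0 (n + p)) t)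
                            (fst (pic G1 G2 T z0 x0 (n + p)) t - fst (pic G1 G2 T z0 x0 n) t)).
    pose proof (Rabs_triang (snd (pic G1 G2 T z0 x0 (S (n + p))) t - snd (pic G1 G2 T z0 x0 (n + p)) t)
                            (snd (pic G1 G2 T z0 x0 (n + p)) t - snd (pic G1 G2 T z0 x0 n) t)).
    repeat match goal with H : context [?a - ?b + (?b - ?c)] |- _ =>
      replace (a - b + (b - c)) with (a - c) in H by ring end.
    lra.
Qed.

Lemma loc_interval (P : R -> Prop) t a b : a < t < b ->
  (forall s, a < s < b -> P s) -> locally t P.
Proof.
  intros Ht HP. assert (He : 0 < Rmin (t - a) (b - t)) by (apply Rmin_pos; lra).
  exists (mkposreal _ He). intros y Hy. change (Rabs (y - t) < Rmin (t - a) (b - t)) in Hy.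
  apply HP. apply Rabs_lt_between in Hy. pose proof (Rmin_l (t - a) (b - t)).
  pose proof (Rmin_r (t - a) (b - t)). lra.
Qed.

Theorem picard G1 G2 L M T z0 x0 : 0 <= L -> 0 <= M -> 0 < T ->
  GLip G1 L -> GLip G2 L -> (forall a b, Rabs (G1 a b) <= M) -> (forall a b, Rabs (G2 a b) <= M) ->
  exists zt xt : R -> R, zt 0 = z0 /\ xt 0 = x0 /\
    (forall t, continuous zt t /\ continuous xt t) /\
    (forall t, 0 < t < T -> is_derive zt t (G1 (zt t) (xt t)) /\ is_derive xt t (G2 (zt t) (xt t))).
Proof.
  intros HL HM HT H1 H2 B1 B2.
  set (zn := fun n => fst (pic G1 G2 T z0 x0 n)).
  set (xn := fun n => snd (pic G1 G2 T z0 x0 n)).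
  set (A := 2 * M * T * exp ((4 * L + 1) * T)).
  assert (HA : 0 <= A).
  { unfold A. apply Rmult_le_pos. nra. left; apply exp_pos. }
  pose proof (pic_tail G1 G2 L M T z0 x0 HL HM HT H1 H2 B1 B2) as PT.
  pose proof (pic_lip G1 G2 L M T z0 x0 HL HM ltac:(lra) H1 H2 B1 B2) as PL.
  assert (TZ : forall n p s, 0 <= s <= T -> Rabs (zn (n + p)%nat s - zn n s) <= 2 * A * (/2) ^ n).
  { intros n p s Hs. pose proof (PT n p s Hs). fold A in H. pose proof (pow_le (/2) (n + p) ltac:(lra)).
    pose proof (Rabs_pos (snd (pic G1 G2 T z0 x0 (n + p)) s - snd (pic G1 G2 T z0 x0 n) s)).
    unfold zn. nra. }
  assert (TX : forall n p s, 0 <= s <= T -> Rabs (xn (n + p)%nat s - xn n s) <= 2 * A * (/2) ^ n).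
  { intros n p s Hs. pose proof (PT n p s Hs). fold A in H. pose proof (pow_le (/2) (n + p) ltac:(lra)).
    pose proof (Rabs_pos (fst (pic G1 G2 T z0 x0 (n + p)) s - fst (pic G1 G2 T z0 x0 n) s)).
    unfold xn. nra. }
  assert (CAU : forall u : nat -> R -> R, (forall n p s, 0 <= s <= T -> Rabs (u (n + p)%nat s - u n s) <= 2 * A * (/2) ^ n) ->
            forall s, 0 <= s <= T -> ex_finite_lim_seq (fun n => u n s)).
  { intros u Hu s Hs. apply ex_lim_seq_cauchy_corr. intros eps.
    assert (Hy : 0 < eps / (2 * A + 1)) by (apply Rdiv_lt_0_compat; [apply cond_pos | lra]).
    destruct (pow_lt_1_zero (/2) ltac:(rewrite Rabs_right; lra) _ Hy) as [N HN].
    exists N. intros n m Hn Hm.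
    assert (Hgen : forall n p, (N <= n)%nat -> Rabs (u (n + p)%nat s - u n s) < eps).
    { intros n' p Hn'. eapply Rle_lt_trans. apply Hu; auto.
      pose proof (HN n' Hn'). rewrite Rabs_right in H by (apply Rle_ge, pow_le; lra).
      pose proof (cond_pos eps).
      apply Rle_lt_trans with ((2 * A + 1) * (/ 2) ^ n'). pose proof (pow_le (/2) n' ltac:(lra)). nra.
      apply Rmult_lt_reg_r with (/ (2 * A + 1)). apply Rinv_0_lt_compat; lra.
      replace ((2 * A + 1) * (/ 2) ^ n' * / (2 * A + 1)) with ((/ 2) ^ n') by (field; lra).
      exact H. }
    destruct (Nat.le_ge_cases n m) as [Hnm|Hnm].
    - replace m with (n + (m - n))%nat by lia. rewrite Rabs_minus_sym. apply Hgen; auto.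
    - replace n with (m + (n - m))%nat by lia. apply Hgen; auto. }
  set (zt := fun t => real (Lim_seq (fun n => zn n (clT T t)))).
  set (xt := fun t => real (Lim_seq (fun n => xn n (clT T t)))).
  assert (LZ : forall t, is_lim_seq (fun n => zn n (clT T t)) (zt t)).
  { intros t. unfold zt. destruct (CAU zn TZ (clT T t) (clT_in T t ltac:(lra))) as [l Hl].
    rewrite (is_lim_seq_unique _ _ Hl). simpl. exact Hl. }
  assert (LX : forall t, is_lim_seq (fun n => xn n (clT T t)) (xt t)).
  { intros t. unfold xt. destruct (CAU xn TX (clT T t) (clT_in T t ltac:(lra))) as [l Hl].
    rewrite (is_lim_seq_unique _ _ Hl). simpl. exact Hl. }
  assert (CZ : forall n s, 0 <= s <= T -> Rabs (zt s - zn n s) <= 2 * A * (/2) ^ n).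
  { intros n s Hs. apply (lim_abs_le (fun m => zn m s - zn n s) _ n).
    - apply is_lim_seq_minus'. 2: apply is_lim_seq_const.
      pose proof (LZ s) as HH. rewrite clT_id in HH by auto. exact HH.
    - intros m. rewrite Nat.add_comm. apply TZ; auto. }
  assert (CX : forall n s, 0 <= s <= T -> Rabs (xt s - xn n s) <= 2 * A * (/2) ^ n).
  { intros n s Hs. apply (lim_abs_le (fun m => xn m s - xn n s) _ n).
    - apply is_lim_seq_minus'. 2: apply is_lim_seq_const.
      pose proof (LX s) as HH. rewrite clT_id in HH by auto. exact HH.
    - intros m. rewrite Nat.add_comm. apply TX; auto. }
  assert (LipZ : Lip1 zt M).
  { intros t t'. apply (lim_abs_le (fun m => zn m (clT T t) - zn m (clT T t')) _ 0).
    - apply is_lim_seq_minus'; auto.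
    - intros m. eapply Rle_trans. apply (proj1 (PL (m + 0)%nat)).
      apply Rmult_le_compat_l; auto. apply clT_lip; lra. }
  assert (LipX : Lip1 xt M).
  { intros t t'. apply (lim_abs_le (fun m => xn m (clT T t) - xn m (clT T t')) _ 0).
    - apply is_lim_seq_minus'; auto.
    - intros m. eapply Rle_trans. apply (proj2 (PL (m + 0)%nat)).
      apply Rmult_le_compat_l; auto. apply clT_lip; lra. }
  assert (Cg : forall G, GLip G L -> forall s, continuous (fun s => G (zt s) (xt s)) s).
  { intros G HG s. apply (lip_cont _ (L * (2 * M))). nra. apply comp_lip; auto. }
  assert (Cgn : forall G n, GLip G L -> forall s, continuous (fun s => G (zn n s) (xn n s)) s).
  { intros G n HG s. destruct (PL n). apply (lip_cont _ (L * (2 * M))). nra. apply comp_lip; auto. }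
  assert (INT : forall G u un w, GLip G L -> 
     (forall n s, 0 <= s <= T -> Rabs (u s - un n s) <= 2 * A * (/2) ^ n) ->
     (forall n t, 0 <= t <= T -> un (S n) t = w + RInt (fun s => G (zn n s) (xn n s)) 0 t) ->
     forall t, 0 <= t <= T -> u t = w + RInt (fun s => G (zt s) (xt s)) 0 t).
  { intros G u un w HG Hu Hun t Ht.
    apply Rminus_diag_uniq. apply (small_zero _ (2 * A + 4 * T * L * A)). intros n.
    replace (u t - (w + RInt (fun s => G (zt s) (xt s)) 0 t)) with
      ((u t - un (S n) t) + (RInt (fun s => G (zn n s) (xn n s)) 0 t - RInt (fun s => G (zt s) (xt s)) 0 t))
      by (rewrite Hun by auto; ring).
    rewrite RInt_sub by (intros; first [apply Cgn | apply Cg]; auto).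
    eapply Rle_trans. apply Rabs_triang.
    pose proof (Hu (S n) t Ht). simpl pow in H.
    assert (Rabs (RInt (fun s => G (zn n s) (xn n s) - G (zt s) (xt s)) 0 t) <= (t - 0) * (L * (4 * A * (/2) ^ n))).
    { apply abs_RInt_le_const. lra. apply exRc. intros; apply cont_sub; [apply Cgn|apply Cg]; auto.
      intros s Hs. eapply Rle_trans. apply HG.
      pose proof (CZ n s ltac:(lra)). pose proof (CX n s ltac:(lra)).
      rewrite Rabs_minus_sym in H0, H3. apply Rmult_le_compat_l; auto. lra. }
    pose proof (pow_le (/2) n ltac:(lra)).
    assert (0 <= L * A * (/2) ^ n) by (apply Rmult_le_pos; [apply Rmult_le_pos|]; auto).
    assert ((t - 0) * (L * (4 * A * (/ 2) ^ n)) <= T * (L * (4 * A * (/ 2) ^ n))) by nra.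
    nra. }
  assert (IZ : forall t, 0 <= t <= T -> zt t = z0 + RInt (fun s => G1 (zt s) (xt s)) 0 t).
  { apply (INT G1 zt zn z0 H1 CZ). intros n t Ht. unfold zn. rewrite pic_step_fst; auto. }
  assert (IX : forall t, 0 <= t <= T -> xt t = x0 + RInt (fun s => G2 (zt s) (xt s)) 0 t).
  { apply (INT G2 xt xn x0 H2 CX). intros n t Ht. unfold xn. rewrite pic_step_snd; auto. }
  exists zt, xt. split; [|split; [|split]].
  - rewrite IZ by lra. rewrite RInt_point. unfold zero; simpl. ring.
  - rewrite IX by lra. rewrite RInt_point. unfold zero; simpl. ring.
  - intros t. split; apply (lip_cont _ M); auto.
  - intros t Ht. split.
    + apply (is_derive_ext_loc (fun s => z0 + RInt (fun s => G1 (zt s) (xt s)) 0 s)).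
      apply (loc_interval _ t 0 T Ht). intros s Hs. symmetry. apply IZ. lra.
      apply (deriv_int (fun s => G1 (zt s) (xt s))). apply Cg; auto.
    + apply (is_derive_ext_loc (fun s => x0 + RInt (fun s => G2 (zt s) (xt s)) 0 s)).
      apply (loc_interval _ t 0 T Ht). intros s Hs. symmetry. apply IX. lra.
      apply (deriv_int (fun s => G2 (zt s) (xt s))). apply Cg; auto.
Qed.

Definition clamp (r y : R) := Rmax (- r) (Rmin r y).

Lemma clamp_in r y : 0 <= r -> Rabs (clamp r y) <= r.
Proof. intros; unfold clamp, Rmax, Rmin; repeat destruct Rle_dec; apply Rabs_le; lra. Qed.

Lemma clamp_lip r y y' : 0 <= r -> Rabs (clamp r y - clamp r y') <= Rabs (y - y').
Proof. intros; unfold clamp, Rmax, Rmin; repeat destruct Rle_dec;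
  unfold Rabs; repeat destruct Rcase_abs; lra. Qed.

Lemma clamp_id r y : Rabs y <= r -> clamp r y = y.
Proof. intros H; apply Rabs_le_between in H; unfold clamp, Rmax, Rmin; repeat destruct Rle_dec; lra. Qed.

Lemma LB2_global r f : 0 <= r -> LB2 r f ->
  exists L M, 0 <= L /\ 0 <= M /\ GLip (fun a b => f (clamp r a) (clamp r b)) L /\
    forall a b, Rabs (f (clamp r a) (clamp r b)) <= M.
Proof.
  intros Hr [L [B [HL [HB H]]]]. exists L, B. split; auto. split; auto. split.
  - intros a b a' b'.
    destruct (H (clamp r a) (clamp r b) (clamp r a') (clamp r b')) as [_ H2]; try apply clamp_in; auto.
    eapply Rle_trans. exact H2. apply Rmult_le_compat_l; auto.
    pose proof (clamp_lip r a a' Hr). pose proof (clamp_lip r b b' Hr). lra.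
  - intros a b. destruct (H (clamp r a) (clamp r b) (clamp r a) (clamp r b)) as [H1 _]; try apply clamp_in; auto.
Qed.

Lemma S_lin (S : R -> R) : S 0 = 0 -> is_derive S 0 1 ->
  forall eps, 0 < eps -> exists del, 0 < del /\ forall z, Rabs z < del -> Rabs (S z - z) <= eps * Rabs z.
Proof.
  intros H0 Hd eps Heps. apply is_derive_Reals in Hd.
  destruct (Hd eps Heps) as [del Hdel]. exists del. split. apply cond_pos.
  intros z Hz. destruct (Req_dec z 0) as [E|E].
  - subst. rewrite H0. rewrite Rminus_0_r, !Rabs_R0. lra.
  - pose proof (Hdel z E Hz). rewrite Rplus_0_l, H0, Rminus_0_r in H.
    replace (S z - z) with (z * (S z / z - 1)) by (field; auto).
    rewrite Rabs_mult. rewrite Rmult_comm. apply Rmult_le_compat_r. apply Rabs_pos. lra.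
Qed.

Lemma remainder d u Kz Kx k sigma l rho (S : R -> R) :
  0 <= u -> 0 < Kz -> 0 < Kx -> 0 < sigma -> 0 < l -> 0 <= rho ->
  S 0 = 0 -> is_derive S 0 1 ->
  forall eps, 0 < eps -> exists del, 0 < del /\ del <= 1 /\ forall z x, Rabs z < del -> Rabs x < del ->
    Rabs (fz d u 0 Kz sigma S z x - ((u - d - Kz) * z + Kz * x)) +
    Rabs (fx Kx k sigma l rho z x - (z - x)) <= eps * (Rabs z + Rabs x).
Proof.
  intros Hu HKz HKx Hs Hl Hrho H0 Hd eps Heps.
  set (c := rho / l). assert (Hc : 0 <= c) by (unfold c; apply Rdiv_le_0_compat; lra).
  set (K' := 2 * Kz + Kx * c + Kx + 2).
  assert (HK' : 0 < K') by (unfold K'; nra).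
  destruct (S_lin S H0 Hd (eps / (2 * (u + 1)))) as [d1 [Hd1 HS]].
  { apply Rdiv_lt_0_compat; lra. }
  set (d2 := eps * sigma ^ 2 / (K' + 1)).
  assert (Hd2 : 0 < d2) by (unfold d2; apply Rdiv_lt_0_compat; [apply Rmult_lt_0_compat; [lra|nra]|lra]).
  exists (Rmin 1 (Rmin d1 d2)). split. apply Rmin_pos; [lra|apply Rmin_pos; lra].
  split. apply Rmin_l.
  intros z x Hz Hx.
  pose proof (Rmin_l 1 (Rmin d1 d2)). pose proof (Rmin_r 1 (Rmin d1 d2)).
  pose proof (Rmin_l d1 d2). pose proof (Rmin_r d1 d2).
  set (del := Rmin 1 (Rmin d1 d2)) in *.
  pose proof (one_minus_eta sigma z Hs) as [He0 He1].
  set (e := 1 - eta sigma z) in *.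
  assert (Heta : eta sigma z = 1 - e) by (unfold e; ring).
  unfold fz, fx. rewrite Heta. fold c.
  replace (- d * z + u * S z + 0 - Kz * (1 - e) * (z - x) - ((u - d - Kz) * z + Kz * x))
    with (u * (S z - z) + Kz * e * (z - x)) by ring.
  replace ((1 - (1 - e)) * Kx * (c * tanh (k * z) - x) - (1 - e) * (x - z) - (z - x))
    with (e * (Kx * (c * tanh (k * z) - x) + (x - z))) by ring.
  assert (HSz : Rabs (S z - z) <= eps / (2 * (u + 1)) * Rabs z) by (apply HS; lra).
  pose proof (tanh_bound (k * z)) as Ht.
  assert (Hz1 : Rabs z <= 1) by lra. assert (Hx1 : Rabs x <= 1) by lra.
  assert (A1 : Rabs (u * (S z - z) + Kz * e * (z - x)) <= u * Rabs (S z - z) + Kz * e * 2).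
  { eapply Rle_trans. apply Rabs_triang. rewrite !Rabs_mult, (Rabs_right u), (Rabs_right Kz), (Rabs_right e) by lra.
    pose proof (Rabs_triang z (- x)) as Tr. rewrite Rabs_Ropp in Tr. unfold Rminus.
    assert (Rabs (z + - x) <= 2) by lra. assert (0 <= Kz * e) by nra. nra. }
  assert (A2 : Rabs (e * (Kx * (c * tanh (k * z) - x) + (x - z))) <= e * (Kx * c + Kx + 2)).
  { rewrite Rabs_mult, (Rabs_right e) by lra. apply Rmult_le_compat_l; auto.
    eapply Rle_trans. apply Rabs_triang. rewrite Rabs_mult, (Rabs_right Kx) by lra.
    assert (Rabs (c * tanh (k * z) - x) <= c + 1).
    { eapply Rle_trans. unfold Rminus. apply Rabs_triang. rewrite Rabs_Ropp, Rabs_mult, (Rabs_right c) by lra. nra. }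
    assert (Rabs (x - z) <= 2).
    { eapply Rle_trans. unfold Rminus. apply Rabs_triang. rewrite Rabs_Ropp. lra. }
    nra. }
  assert (Hez : e <= del * Rabs z / (2 * sigma ^ 2)).
  { eapply Rle_trans. apply He1. unfold Rdiv. apply Rmult_le_compat_r.
    left; apply Rinv_0_lt_compat; nra.
    replace (z ^ 2) with (Rabs z * Rabs z) by (rewrite <- Rabs_mult; simpl; rewrite Rmult_1_r; apply Rabs_right; nra).
    pose proof (Rabs_pos z). nra. }
  assert (Hek : e * K' <= eps / 2 * Rabs z).
  { eapply Rle_trans. apply Rmult_le_compat_r. lra. exact Hez.
    assert (del * K' <= eps * sigma ^ 2 / 2 * 2 / 1).
    { apply Rle_trans with (d2 * (K' + 1)). pose proof (Rabs_pos z). nra.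
      unfold d2. unfold Rdiv. rewrite Rmult_assoc, Rinv_l by lra. lra. }
    pose proof (Rabs_pos z). assert (0 < sigma ^ 2) by nra.
    unfold Rdiv in *. 
    apply Rle_trans with (del * K' * Rabs z * / (2 * sigma ^ 2)). right; ring.
    apply Rle_trans with (eps * sigma ^ 2 * Rabs z * / (2 * sigma ^ 2)).
    apply Rmult_le_compat_r. left; apply Rinv_0_lt_compat; nra.
    apply Rmult_le_compat_r; auto. lra.
    right. field. lra. }
  assert (u * Rabs (S z - z) <= eps / 2 * Rabs z).
  { apply Rle_trans with (u * (eps / (2 * (u + 1)) * Rabs z)). apply Rmult_le_compat_l; auto.
    pose proof (Rabs_pos z).
    apply Rle_trans with (eps / 2 * Rabs z * (u / (u + 1))). right; field; lra.
    assert (u / (u + 1) <= 1). { apply Rmult_le_reg_r with (u + 1). lra. unfold Rdiv. rewrite Rmult_assoc, Rinv_l; lra. }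
    assert (0 <= eps / 2 * Rabs z) by (apply Rmult_le_pos; lra). nra. }
  assert (e * K' = 2 * Kz * e + e * (Kx * c + Kx + 2)) by (unfold K'; ring).
  pose proof (Rabs_pos x). assert (0 <= eps * Rabs x) by nra. lra.
Qed.

Lemma right_cont (f : R -> R) : filterlim f (at_right 0) (locally (f 0)) ->
  forall eps, 0 < eps -> exists del, 0 < del /\ forall y, 0 < y < del -> Rabs (f y - f 0) < eps.
Proof.
  intros H eps Heps.
  destruct (H (fun y => Rabs (y - f 0) < eps)) as [del Hdel].
  { exists (mkposreal eps Heps). intros y Hy. exact Hy. }
  exists del. split. apply cond_pos. intros y [Hy1 Hy2]. apply Hdel; auto.
  change (Rabs (y - 0) < del). rewrite Rminus_0_r, Rabs_right; lra.
Qed.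

Lemma deriv_cont_pt f t df : is_derive f t df -> continuity_pt f t.
Proof.
  intros H. apply continuity_pt_filterlim.
  apply (ex_derive_continuous (K:=R_AbsRing) (V:=R_NormedModule)). eexists; exact H.
Qed.

Lemma mono_right (f df : R -> R) T :
  filterlim f (at_right 0) (locally (f 0)) ->
  (forall t, 0 < t < T -> is_derive f t (df t)) ->
  forall t, 0 <= t < T -> (forall s, 0 < s <= t -> 0 <= df s) -> f 0 <= f t.
Proof.
  intros Hc Hd t Ht Hp.
  destruct (Req_dec t 0) as [E|E]. subst; lra.
  assert (Hmid : forall a, 0 < a <= t -> f a <= f t).
  { intros a Ha. destruct (Req_dec a t). subst; lra.
    destruct (MVT_gen f a t df) as [c [Hcc Heq]].
    - intros x Hx. apply Hd. unfold Rmin, Rmax in Hx. destruct Rle_dec; lra.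
    - intros x Hx. apply (deriv_cont_pt _ _ (df x)). apply Hd. unfold Rmin, Rmax in Hx. destruct Rle_dec; lra.
    - unfold Rmin, Rmax in Hcc. destruct Rle_dec; try lra.
      assert (0 <= df c) by (apply Hp; lra). nra. }
  destruct (Rle_dec (f 0) (f t)) as [Hl|Hl]; auto. exfalso.
  destruct (right_cont f Hc (f 0 - f t) ltac:(lra)) as [del [Hdel Hb]].
  set (a := Rmin (del / 2) t).
  assert (0 < a) by (apply Rmin_pos; lra).
  assert (a <= del / 2) by apply Rmin_l. assert (a <= t) by apply Rmin_r.
  pose proof (Hb a ltac:(lra)). pose proof (Hmid a ltac:(lra)).
  apply Rabs_lt_between in H2. lra.
Qed.

Lemma barrier (h : R -> R) T L :
  (forall eps, 0 < eps -> exists del, 0 < del /\ forall y, 0 < y < del -> Rabs (h y - h 0) < eps) ->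
  (forall t, 0 < t < T -> continuity_pt h t) ->
  h 0 < L ->
  (forall t, 0 < t < T -> (forall s, 0 <= s < t -> h s < L) -> h t < L) ->
  forall t, 0 <= t < T -> h t < L.
Proof.
  intros Hr Hc H0 Hind t1 Ht1.
  destruct (Rlt_dec (h t1) L) as [Hlt|Hge]; auto. exfalso.
  set (E := fun y => 0 <= - y <= t1 /\ L <= h (- y)).
  assert (Hb : bound E). { exists 0. intros y [Hy _]. lra. }
  assert (Hne : exists y, E y). { exists (- t1). unfold E. rewrite Ropp_involutive. lra. }
  destruct (completeness E Hb Hne) as [m [Hub Hlub]].
  set (tau := - m).
  assert (Hlow : forall s, 0 <= s <= t1 -> L <= h s -> tau <= s).
  { intros s Hs Hh. unfold tau. assert (E (- s)) by (unfold E; rewrite Ropp_involutive; lra).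
    pose proof (Hub _ H). lra. }
  assert (Hgl : forall b, (forall s, 0 <= s <= t1 -> L <= h s -> b <= s) -> b <= tau).
  { intros b Hbnd. unfold tau. assert (m <= - b).
    { apply Hlub. intros y [Hy1 Hy2]. pose proof (Hbnd (- y) Hy1 Hy2). lra. }
    lra. }
  assert (Ht0 : 0 <= tau) by (apply Hgl; intros; lra).
  assert (Htt : tau <= t1) by (apply Hlow; lra).
  assert (Hbefore : forall s, 0 <= s < tau -> h s < L).
  { intros s Hs. destruct (Rlt_dec (h s) L); auto. pose proof (Hlow s ltac:(lra) ltac:(lra)). lra. }
  destruct (Req_dec tau 0) as [Z|Z].
  - destruct (Hr (L - h 0) ltac:(lra)) as [del [Hdel Hd]].
    assert (del <= tau).
    { apply Hgl. intros s Hs Hh. destruct (Rle_dec del s) as [|Hn]; auto.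
      destruct (Req_dec s 0). subst; lra.
      pose proof (Hd s ltac:(lra)). apply Rabs_lt_between in H1. lra. }
    lra.
  - assert (Htau : 0 < tau < T) by lra.
    assert (HL : h tau < L) by (apply Hind; auto).
    destruct (Hc tau Htau (L - h tau) ltac:(lra)) as [del [Hdel Hd]].
    assert (tau + del / 2 <= tau).
    { apply Hgl. intros s Hs Hh. destruct (Rle_dec (tau + del / 2) s) as [|Hn]; auto.
      pose proof (Hlow s Hs Hh).
      destruct (Req_dec s tau). subst; lra.
      assert (R_dist (h s) (h tau) < L - h tau).
      { apply Hd. split. unfold D_x, no_cond; auto. simpl. unfold R_dist. rewrite Rabs_right; lra. }
      unfold R_dist in H2. apply Rabs_lt_between in H2. lra. }
    lra.
Qed.

Lemma left_le (h : R -> R) t B : 0 < t -> continuity_pt h t ->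
  (forall s, 0 <= s < t -> h s <= B) -> h t <= B.
Proof.
  intros Ht Hc Hb. destruct (Rle_dec (h t) B) as [|Hn]; auto. exfalso.
  destruct (Hc (h t - B) ltac:(lra)) as [del [Hdel Hd]].
  set (s := t - Rmin (del / 2) t / 2).
  assert (0 < Rmin (del / 2) t) by (apply Rmin_pos; lra).
  pose proof (Rmin_l (del / 2) t). pose proof (Rmin_r (del / 2) t).
  assert (R_dist (h s) (h t) < h t - B).
  { apply Hd. split. split; [exact I | unfold s; lra]. simpl. unfold R_dist, s.
    rewrite Rabs_left; lra. }
  unfold R_dist in H2. apply Rabs_lt_between in H2.
  pose proof (Hb s ltac:(unfold s; lra)). lra.
Qed.

Lemma mono_right_neg (f df : R -> R) T :
  filterlim f (at_right 0) (locally (f 0)) ->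
  (forall t, 0 < t < T -> is_derive f t (df t)) ->
  forall t, 0 <= t < T -> (forall s, 0 < s <= t -> df s <= 0) -> f t <= f 0.
Proof.
  intros Hc Hd t Ht Hp.
  destruct (Req_dec t 0) as [E|E]. subst; lra.
  assert (Hmid : forall a, 0 < a <= t -> f t <= f a).
  { intros a Ha. destruct (Req_dec a t). subst; lra.
    destruct (MVT_gen f a t df) as [c [Hcc Heq]].
    - intros x Hx. apply Hd. unfold Rmin, Rmax in Hx. destruct Rle_dec; lra.
    - intros x Hx. apply (deriv_cont_pt _ _ (df x)). apply Hd. unfold Rmin, Rmax in Hx. destruct Rle_dec; lra.
    - unfold Rmin, Rmax in Hcc. destruct Rle_dec; try lra.
      assert (df c <= 0) by (apply Hp; lra). nra. }
  destruct (Rle_dec (f t) (f 0)) as [Hl|Hl]; auto. exfalso.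
  destruct (right_cont f Hc (f t - f 0) ltac:(lra)) as [del [Hdel Hb]].
  set (a := Rmin (del / 2) t).
  assert (0 < a) by (apply Rmin_pos; lra).
  assert (a <= del / 2) by apply Rmin_l. assert (a <= t) by apply Rmin_r.
  pose proof (Hb a ltac:(lra)). pose proof (Hmid a ltac:(lra)).
  apply Rabs_lt_between in H2. lra.
Qed.

Lemma rc_plus (f g : R -> R) a b :
  filterlim f (at_right 0) (locally a) -> filterlim g (at_right 0) (locally b) ->
  filterlim (fun t => f t + g t) (at_right 0) (locally (a + b)).
Proof. intros Hf Hg. apply (filterlim_comp_2 f g Rplus Hf Hg). exact (filterlim_plus (V:=R_NormedModule) a b). Qed.

Lemma rc_mult (f g : R -> R) a b :
  filterlim f (at_right 0) (locally a) -> filterlim g (at_right 0) (locally b) ->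
  filterlim (fun t => f t * g t) (at_right 0) (locally (a * b)).
Proof. intros Hf Hg. apply (filterlim_comp_2 f g Rmult Hf Hg). exact (filterlim_mult (K:=R_AbsRing) a b). Qed.

Lemma rc_const (a : R) :
  filterlim (fun _ => a) (at_right 0) (locally a).
Proof. apply filterlim_const. Qed.


Lemma at_right_le : filter_le (at_right 0) (locally 0).
Proof. intros P [eps H]. exists eps. intros y Hy _. apply H; auto. Qed.

Lemma cont_expc c x : continuous (fun t => exp (c * t)) x.
Proof. apply (ex_derive_continuous (K:=R_AbsRing) (V:=R_NormedModule)). auto_derive; auto. Qed.

Lemma rc_quad_exp (p q r c : R) (zt xt : R -> R) :
  filterlim zt (at_right 0) (locally (zt 0)) -> filterlim xt (at_right 0) (locally (xt 0)) ->
  filterlim (fun t => (p * zt t * zt t + q * zt t * xt t + r * xt t * xt t) * exp (c * t)) (at_right 0)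
    (locally ((p * zt 0 * zt 0 + q * zt 0 * xt 0 + r * xt 0 * xt 0) * exp (c * 0))).
Proof.
  intros Hz Hx.
  apply (rc_mult (fun t => p * zt t * zt t + q * zt t * xt t + r * xt t * xt t) (fun t => exp (c * t))).
  - apply (rc_plus (fun t => p * zt t * zt t + q * zt t * xt t) (fun t => r * xt t * xt t)).
    + apply (rc_plus (fun t => p * zt t * zt t) (fun t => q * zt t * xt t)).
      * apply (rc_mult (fun t => p * zt t) zt). apply (rc_mult (fun _ => p) zt). apply rc_const. exact Hz. exact Hz.
      * apply (rc_mult (fun t => q * zt t) xt). apply (rc_mult (fun _ => q) zt). apply rc_const. exact Hz. exact Hx.
    + apply (rc_mult (fun t => r * xt t) xt). apply (rc_mult (fun _ => r) xt). apply rc_const. exact Hx. exact Hx.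
  - apply (filterlim_filter_le_1 _ at_right_le). exact (cont_expc c 0).
Qed.

Lemma d_mult f g t df dg : is_derive f t df -> is_derive g t dg ->
  is_derive (fun t => f t * g t) t (df * g t + f t * dg).
Proof. intros. exact (is_derive_mult f g t df dg H H0 Rmult_comm). Qed.

Lemma d_plus f g t df dg : is_derive f t df -> is_derive g t dg ->
  is_derive (fun t => f t + g t) t (df + dg).
Proof. intros. exact (is_derive_plus f g t df dg H H0). Qed.

Lemma d_const (a : R) t : is_derive (fun _ => a) t 0.
Proof. exact (is_derive_const a t). Qed.

Lemma d_quad_exp (p q r c : R) zt xt t dz dx : is_derive zt t dz -> is_derive xt t dx ->
  is_derive (fun t => (p * zt t * zt t + q * zt t * xt t + r * xt t * xt t) * exp (c * t)) t
   ((2 * p * zt t * dz + q * (dz * xt t + zt t * dx) + 2 * r * xt t * dx + c * (p * zt t * zt t + q * zt t * xt t + r * xt t * xt t)) * exp (c * t)).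
Proof.
  intros Hz Hx.
  assert (He : is_derive (fun t => exp (c * t)) t (c * exp (c * t))).
  { auto_derive; auto. ring. }
  pose proof (d_mult (fun _ => p) zt t _ _ (d_const p t) Hz) as P1.
  pose proof (d_mult (fun t => p * zt t) zt t _ _ P1 Hz) as P2.
  pose proof (d_mult (fun _ => q) zt t _ _ (d_const q t) Hz) as Q1.
  pose proof (d_mult (fun t => q * zt t) xt t _ _ Q1 Hx) as Q2.
  pose proof (d_mult (fun _ => r) xt t _ _ (d_const r t) Hx) as R1.
  pose proof (d_mult (fun t => r * xt t) xt t _ _ R1 Hx) as R2.
  pose proof (d_plus (fun t => p * zt t * zt t) (fun t => q * zt t * xt t) t _ _ P2 Q2) as S1.
  pose proof (d_plus (fun t => p * zt t * zt t + q * zt t * xt t) (fun t => r * xt t * xt t) t _ _ S1 R2) as S2.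
  pose proof (d_mult (fun t => p * zt t * zt t + q * zt t * xt t + r * xt t * xt t) (fun t => exp (c * t)) t _ _ S2 He) as F.
  cbv beta in F.
  match type of F with is_derive _ _ ?D => replace (_ * exp (c * t)) with D by ring end.
  exact F.
Qed.

Lemma abs_sum_sq z x : (Rabs z + Rabs x) ^ 2 <= 2 * (z ^ 2 + x ^ 2).
Proof.
  pose proof (pow2_abs z). pose proof (pow2_abs x).
  pose proof (pow2_ge_0 (Rabs z - Rabs x)). nra.
Qed.

Lemma abs_w z x : Rabs (x - z) <= Rabs z + Rabs x.
Proof. unfold Rminus. eapply Rle_trans. apply Rabs_triang. rewrite Rabs_Ropp. lra. Qed.

Lemma pert_bound a b z x s1 s2 R eps : 0 <= a -> 0 <= b -> 0 <= eps ->
  Rabs s1 <= R -> Rabs s2 <= R -> R <= eps * (Rabs z + Rabs x) ->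
  Rabs (a * z * s1 + b * (x - z) * s2) <= 2 * (a + b) * eps * (z ^ 2 + x ^ 2).
Proof.
  intros Ha Hb He H1 H2 Hr.
  pose proof (abs_w z x). pose proof (abs_sum_sq z x).
  pose proof (Rabs_pos z). pose proof (Rabs_pos x). pose proof (Rabs_pos s1). pose proof (Rabs_pos s2).
  eapply Rle_trans. apply Rabs_triang. rewrite !Rabs_mult, (Rabs_right a), (Rabs_right b) by lra.
  assert (Rabs z <= Rabs z + Rabs x) by lra. assert (0 <= Rabs z + Rabs x) by lra.
  set (S := Rabs z + Rabs x) in *.
  assert (Rabs z * Rabs s1 <= S * R) by (apply Rmult_le_compat; lra).
  assert (Rabs (x - z) * Rabs s2 <= S * R) by (pose proof (Rabs_pos (x - z)); apply Rmult_le_compat; lra).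
  assert (a * Rabs z * Rabs s1 <= a * (S * R)) by nra.
  assert (b * Rabs (x - z) * Rabs s2 <= b * (S * R)) by nra.
  assert (S * R <= eps * S ^ 2) by (unfold S in *; nra).
  assert (eps * S ^ 2 <= eps * (2 * (z ^ 2 + x ^ 2))) by (apply Rmult_le_compat_l; lra).
  assert (0 <= S * R) by (apply Rmult_le_pos; unfold S in *; lra).
  assert ((a + b) * (S * R) <= (a + b) * (eps * (2 * (z ^ 2 + x ^ 2)))) by (apply Rmult_le_compat_l; lra).
  lra.
Qed.

Lemma diff_le r1 r2 : Rabs (r2 - r1) <= Rabs r1 + Rabs r2.
Proof. unfold Rminus. eapply Rle_trans. apply Rabs_triang. rewrite Rabs_Ropp. lra. Qed.

Lemma stab_point m Kz al eps z x r1 r2 : 0 < m -> 0 < Kz -> al * Kz = m ->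
  let cz := m ^ 2 / (Kz * (1 + Kz)) in let e0 := cz / (1 + cz) in
  0 <= eps -> eps <= e0 / (24 * (al + 2)) ->
  Rabs r1 + Rabs r2 <= eps * (Rabs z + Rabs x) ->
  2 * al * z * (- m * z + Kz * (x - z) + r1) + 2 * (x - z) * ((z - x + r2) - (- m * z + Kz * (x - z) + r1))
   <= - (e0 / 6) * (z ^ 2 + x ^ 2).
Proof.
  intros Hm HK Hal cz e0 He0 Heps Hr.
  assert (Hal0 : 0 < al) by nra.
  assert (Hcz : 0 < cz) by (unfold cz; apply Rdiv_lt_0_compat; nra).
  assert (He1 : e0 <= 1) by (unfold e0; apply Rmult_le_reg_r with (1 + cz); [lra|]; unfold Rdiv; rewrite Rmult_assoc, Rinv_l; lra).
  assert (He2 : e0 <= cz) by (unfold e0; apply Rmult_le_reg_r with (1 + cz); [lra|]; unfold Rdiv; rewrite Rmult_assoc, Rinv_l; nra).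
  assert (He3 : 0 < e0) by (unfold e0; apply Rdiv_lt_0_compat; lra).
  set (Q := al * m * z ^ 2 - 2 * m * z * (x - z) + (1 + Kz) * (x - z) ^ 2).
  assert (E : 2 * al * z * (- m * z + Kz * (x - z) + r1) + 2 * (x - z) * ((z - x + r2) - (- m * z + Kz * (x - z) + r1))
           = - 2 * Q + (2 * al * z * r1 + 2 * (x - z) * (r2 - r1))).
  { unfold Q. rewrite <- Hal. ring. }
  rewrite E.
  assert (Hq1 : (1 + Kz) * Q - cz * (1 + Kz) * z ^ 2 = (m * z - (1 + Kz) * (x - z)) ^ 2).
  { unfold Q, cz. rewrite <- Hal. field. lra. }
  assert (Hq2 : Kz * (Q - (x - z) ^ 2) = (m * z - Kz * (x - z)) ^ 2).
  { unfold Q. rewrite <- Hal. ring. }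
  assert (Q1 : cz * z ^ 2 <= Q).
  { pose proof (pow2_ge_0 (m * z - (1 + Kz) * (x - z))).
    assert ((1 + Kz) * (Q - cz * z ^ 2) >= 0) by nra.
    assert (0 < 1 + Kz) by lra. nra. }
  assert (Q2 : (x - z) ^ 2 <= Q).
  { pose proof (pow2_ge_0 (m * z - Kz * (x - z))). nra. }
  assert (N3 : z ^ 2 + x ^ 2 <= 3 * (z ^ 2 + (x - z) ^ 2)).
  { pose proof (pow2_ge_0 (3 * z - 2 * x)). pose proof (pow2_ge_0 x). nra. }
  assert (Q3 : e0 * (z ^ 2 + x ^ 2) / 6 <= Q).
  { assert (e0 * z ^ 2 <= cz * z ^ 2) by (apply Rmult_le_compat_r; [apply pow2_ge_0|lra]).
    assert (e0 * (x - z) ^ 2 <= (x - z) ^ 2) by (pose proof (pow2_ge_0 (x - z)); nra).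
    assert (e0 * (z ^ 2 + x ^ 2) <= e0 * (3 * (z ^ 2 + (x - z) ^ 2))) by (apply Rmult_le_compat_l; lra).
    lra. }
  pose proof (Rabs_pos r2). pose proof (Rabs_pos r1).
  pose proof (pert_bound (2 * al) 2 z x r1 (r2 - r1) (Rabs r1 + Rabs r2) eps ltac:(lra) ltac:(lra) He0
     ltac:(lra) (diff_le r1 r2) Hr) as Hp.
  apply Rabs_le_between in Hp.
  assert (HN : 0 <= z ^ 2 + x ^ 2) by nra.
  assert (2 * (2 * al + 2) * eps * (z ^ 2 + x ^ 2) <= e0 / 6 * (z ^ 2 + x ^ 2)).
  { apply Rmult_le_compat_r; auto.
    apply Rle_trans with (4 * (al + 2) * eps). nra.
    apply Rle_trans with (4 * (al + 2) * (e0 / (24 * (al + 2)))). apply Rmult_le_compat_l; lra.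
    right. field. lra. }
  unfold Rdiv in *. nra.
Qed.

Lemma unst_point n Kz be eps z x r1 r2 : 0 < n -> 0 < Kz -> be * n = Kz ->
  let cz := n / (1 + Kz) in let mu := cz * be / (cz + be) in
  0 <= eps -> eps <= mu / (24 * (1 + be)) ->
  Rabs r1 + Rabs r2 <= eps * (Rabs z + Rabs x) ->
  2 * z * (n * z + Kz * (x - z) + r1) - 2 * be * (x - z) * ((z - x + r2) - (n * z + Kz * (x - z) + r1))
   >= (mu / 6) * (z ^ 2 + x ^ 2).
Proof.
  intros Hn HK Hbe cz mu He0 Heps Hr.
  assert (Hbe0 : 0 < be) by nra.
  assert (Hcz : 0 < cz) by (unfold cz; apply Rdiv_lt_0_compat; lra).
  assert (Hm1 : mu <= cz).
  { unfold mu. apply Rmult_le_reg_r with (cz + be). lra. unfold Rdiv. rewrite Rmult_assoc, Rinv_l by lra. nra. }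
  assert (Hm2 : mu <= be).
  { unfold mu. apply Rmult_le_reg_r with (cz + be). lra. unfold Rdiv. rewrite Rmult_assoc, Rinv_l by lra. nra. }
  assert (Hm3 : 0 < mu) by (unfold mu; apply Rdiv_lt_0_compat; nra).
  set (Q := n * z ^ 2 + 2 * Kz * z * (x - z) + be * (1 + Kz) * (x - z) ^ 2).
  assert (E : 2 * z * (n * z + Kz * (x - z) + r1) - 2 * be * (x - z) * ((z - x + r2) - (n * z + Kz * (x - z) + r1))
           = 2 * Q + (2 * z * r1 + 2 * be * (x - z) * (r1 - r2))).
  { unfold Q. rewrite <- Hbe. ring. }
  rewrite E.
  assert (Q1 : cz * z ^ 2 <= Q).
  { assert (Hid : n * (1 + Kz) * (Q - cz * z ^ 2) = Kz * (n * z + (1 + Kz) * (x - z)) ^ 2 * (be * n / Kz)).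
    { unfold Q, cz. rewrite <- Hbe. field. split; lra. }
    assert (0 <= Kz * (n * z + (1 + Kz) * (x - z)) ^ 2 * (be * n / Kz)).
    { rewrite Hbe. replace (Kz / Kz) with 1 by (field; lra). pose proof (pow2_ge_0 (n * z + (1 + Kz) * (x - z))). nra. }
    assert (0 < n * (1 + Kz)) by nra. nra. }
  assert (Q2 : be * (x - z) ^ 2 <= Q).
  { assert (Hid : n * (Q - be * (x - z) ^ 2) = (n * z + Kz * (x - z)) ^ 2).
    { unfold Q. rewrite <- Hbe. ring. }
    pose proof (pow2_ge_0 (n * z + Kz * (x - z))). nra. }
  assert (N3 : z ^ 2 + x ^ 2 <= 3 * (z ^ 2 + (x - z) ^ 2)).
  { pose proof (pow2_ge_0 (3 * z - 2 * x)). pose proof (pow2_ge_0 x). nra. }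
  assert (Q3 : mu * (z ^ 2 + x ^ 2) / 6 <= Q).
  { assert (mu * z ^ 2 <= cz * z ^ 2) by (apply Rmult_le_compat_r; [apply pow2_ge_0|lra]).
    assert (mu * (x - z) ^ 2 <= be * (x - z) ^ 2) by (apply Rmult_le_compat_r; [apply pow2_ge_0|lra]).
    assert (mu * (z ^ 2 + x ^ 2) <= mu * (3 * (z ^ 2 + (x - z) ^ 2))) by (apply Rmult_le_compat_l; lra).
    lra. }
  pose proof (Rabs_pos r2). pose proof (Rabs_pos r1).
  assert (Hd : Rabs (r1 - r2) <= Rabs r1 + Rabs r2) by (rewrite Rabs_minus_sym; apply diff_le).
  pose proof (pert_bound 2 (2 * be) z x r1 (r1 - r2) (Rabs r1 + Rabs r2) eps ltac:(lra) ltac:(lra) He0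
     ltac:(lra) Hd Hr) as Hp.
  apply Rabs_le_between in Hp.
  assert (HN : 0 <= z ^ 2 + x ^ 2) by nra.
  assert (2 * (2 + 2 * be) * eps * (z ^ 2 + x ^ 2) <= mu / 6 * (z ^ 2 + x ^ 2)).
  { apply Rmult_le_compat_r; auto.
    apply Rle_trans with (4 * (1 + be) * (mu / (24 * (1 + be)))). 
    replace (2 * (2 + 2 * be) * eps) with (4 * (1 + be) * eps) by ring. apply Rmult_le_compat_l; lra.
    right. field. lra. }
  unfold Rdiv in *. nra.
Qed.

Lemma sq_lt_abs z del : 0 < del -> z ^ 2 < del ^ 2 -> Rabs z < del.
Proof.
  intros Hd H. destruct (Rlt_dec (Rabs z) del) as [|Hn]; auto. exfalso.
  pose proof (pow2_abs z). assert (del <= Rabs z) by lra. nra.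
Qed.

Lemma nrm_sq z x : nrm z x ^ 2 = z ^ 2 + x ^ 2.
Proof. unfold nrm. rewrite pow2_sqrt; auto. nra. Qed.

Lemma nrm_pos z x : 0 <= nrm z x.
Proof. unfold nrm. apply sqrt_pos. Qed.

Lemma le_of_sq a b : 0 <= a -> 0 <= b -> a ^ 2 <= b ^ 2 -> a <= b.
Proof. intros. nra. Qed.

Lemma stable_part d Kz Kx k sigma l rho (S : R -> R) u :
  0 < d -> 0 < Kz -> 0 < Kx -> 0 < sigma -> 0 < l -> 0 <= rho ->
  S 0 = 0 -> is_derive S 0 1 -> 0 < u < d ->
  loc_exp_stable d u 0 Kz Kx k sigma l rho S.
Proof.
  intros Hd HKz HKx Hsg Hl Hrho H0 Hd1 Hu.
  set (m := d - u). assert (Hm : 0 < m) by (unfold m; lra).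
  set (al := m / Kz). assert (Hal : al * Kz = m) by (unfold al; field; lra).
  assert (Hal0 : 0 < al) by (unfold al; apply Rdiv_lt_0_compat; lra).
  set (cz := m ^ 2 / (Kz * (1 + Kz))). set (e0 := cz / (1 + cz)).
  assert (Hcz : 0 < cz) by (unfold cz; apply Rdiv_lt_0_compat; nra).
  assert (He0 : 0 < e0) by (unfold e0; apply Rdiv_lt_0_compat; lra).
  set (eps := e0 / (24 * (al + 2))).
  assert (Heps : 0 < eps) by (unfold eps; apply Rdiv_lt_0_compat; lra).
  destruct (remainder d u Kz Kx k sigma l rho S ltac:(lra) HKz HKx Hsg Hl Hrho H0 Hd1 eps Heps)
    as [del [Hdel [Hdel1 Hrem]]].
  set (V := fun z x => (al + 1) * z * z + (-2) * z * x + 1 * x * x).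
  assert (HVeq : forall z x, V z x = al * z ^ 2 + (x - z) ^ 2) by (intros; unfold V; ring).
  set (k1 := al / (1 + al) / 3).
  assert (Hk1 : 0 < k1) by (unfold k1; apply Rdiv_lt_0_compat; [apply Rdiv_lt_0_compat|]; lra).
  assert (HVlow : forall z x, k1 * (z ^ 2 + x ^ 2) <= V z x).
  { intros z x. rewrite HVeq. unfold k1.
    assert (al / (1 + al) <= al /\ al / (1 + al) <= 1).
    { split; apply Rmult_le_reg_r with (1 + al); try lra; unfold Rdiv; rewrite Rmult_assoc, Rinv_l; nra. }
    assert (0 < al / (1 + al)) by (apply Rdiv_lt_0_compat; lra).
    set (ka := al / (1 + al)) in *.
    assert (z ^ 2 + x ^ 2 <= 3 * (z ^ 2 + (x - z) ^ 2)).
    { pose proof (pow2_ge_0 (3 * z - 2 * x)). pose proof (pow2_ge_0 x). nra. }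
    assert (ka * z ^ 2 <= al * z ^ 2) by (apply Rmult_le_compat_r; [apply pow2_ge_0|lra]).
    assert (ka * (x - z) ^ 2 <= (x - z) ^ 2) by (pose proof (pow2_ge_0 (x - z)); nra).
    unfold Rdiv. nra. }
  assert (HVup : forall z x, V z x <= (al + 2) * (z ^ 2 + x ^ 2)).
  { intros z x. rewrite HVeq. pose proof (pow2_ge_0 (x + z)). nra. }
  assert (HV0 : forall z x, 0 <= V z x).
  { intros z x. pose proof (HVlow z x). assert (0 <= z ^ 2 + x ^ 2) by nra. nra. }
  set (c := e0 / 6 / (al + 2)).
  assert (Hc : 0 < c) by (unfold c; apply Rdiv_lt_0_compat; lra).
  assert (Hdec : forall z x, Rabs z < del -> Rabs x < del ->
     2 * (al + 1) * z * fz d u 0 Kz sigma S z x + (-2) * (fz d u 0 Kz sigma S z x * x + z * fx Kx k sigma l rho z x)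
     + 2 * 1 * x * fx Kx k sigma l rho z x + c * V z x <= 0).
  { intros z x Hz Hx.
    set (r1 := fz d u 0 Kz sigma S z x - ((u - d - Kz) * z + Kz * x)).
    set (r2 := fx Kx k sigma l rho z x - (z - x)).
    pose proof (Hrem z x Hz Hx) as Hr. fold r1 r2 in Hr.
    pose proof (stab_point m Kz al eps z x r1 r2 Hm HKz Hal ltac:(lra) ltac:(unfold eps, e0, cz; lra) Hr) as Hp.
    cbv zeta in Hp. fold cz e0 in Hp.
    replace (fz d u 0 Kz sigma S z x) with (- m * z + Kz * (x - z) + r1) by (unfold r1, m; ring).
    replace (fx Kx k sigma l rho z x) with (z - x + r2) by (unfold r2; ring).
    assert (c * V z x <= e0 / 6 * (z ^ 2 + x ^ 2)).
    { apply Rle_trans with (c * ((al + 2) * (z ^ 2 + x ^ 2))). apply Rmult_le_compat_l; [lra | apply HVup].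
      right. unfold c. field. lra. }
    match goal with |- ?LHS + c * V z x <= 0 =>
      assert (LHS = 2 * al * z * (- m * z + Kz * (x - z) + r1) + 2 * (x - z) * ((z - x + r2) - (- m * z + Kz * (x - z) + r1))) by ring end.
    lra. }
  set (Lb := k1 * del ^ 2 / 2).
  assert (HLb : 0 < Lb) by (unfold Lb; apply Rdiv_lt_0_compat; [apply Rmult_lt_0_compat; nra | lra]).
  set (Dl := sqrt (Lb / (al + 2))).
  assert (HDl2 : Dl ^ 2 = Lb / (al + 2)).
  { unfold Dl. rewrite pow2_sqrt; auto. left; apply Rdiv_lt_0_compat; lra. }
  assert (HDl : 0 < Dl) by (unfold Dl; apply sqrt_lt_R0; apply Rdiv_lt_0_compat; lra).
  set (K0 := (al + 2) / k1).
  exists Dl, (sqrt K0), (c / 2). split; auto. split.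
  { apply sqrt_lt_R0. unfold K0. apply Rdiv_lt_0_compat; lra. }
  split. lra.
  intros T zt xt [Hz0 [Hx0 Hder]] Hn0 t Ht.
  set (h := fun t => ((al + 1) * zt t * zt t + (-2) * zt t * xt t + 1 * xt t * xt t) * exp (c * t)).
  set (dh := fun t => (2 * (al + 1) * zt t * fz d u 0 Kz sigma S (zt t) (xt t)
        + (-2) * (fz d u 0 Kz sigma S (zt t) (xt t) * xt t + zt t * fx Kx k sigma l rho (zt t) (xt t))
        + 2 * 1 * xt t * fx Kx k sigma l rho (zt t) (xt t)
        + c * ((al + 1) * zt t * zt t + (-2) * zt t * xt t + 1 * xt t * xt t)) * exp (c * t)).
  assert (Hhd : forall s, 0 < s < T -> is_derive h s (dh s)).
  { intros s Hs. destruct (Hder s Hs) as [D1 D2]. unfold h, dh.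
    exact (d_quad_exp (al + 1) (-2) 1 c zt xt s _ _ D1 D2). }
  assert (Hrc : filterlim h (at_right 0) (locally (h 0))).
  { exact (rc_quad_exp (al + 1) (-2) 1 c zt xt Hz0 Hx0). }
  assert (Hh0 : h 0 = V (zt 0) (xt 0)) by (unfold h, V; rewrite Rmult_0_r, exp_0; ring).
  assert (HhV : forall s, 0 <= s -> V (zt s) (xt s) <= h s).
  { intros s Hs. unfold h. fold (V (zt s) (xt s)).
    pose proof (exp_ge1 (c * s) ltac:(nra)). pose proof (HV0 (zt s) (xt s)). nra. }
  assert (HN0 : zt 0 ^ 2 + xt 0 ^ 2 < Dl ^ 2).
  { rewrite <- nrm_sq. pose proof (nrm_pos (zt 0) (xt 0)). nra. }
  assert (HV0b : h 0 < Lb).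
  { rewrite Hh0. eapply Rle_lt_trans. apply HVup. rewrite HDl2 in HN0.
    apply Rmult_lt_reg_r with (/ (al + 2)). apply Rinv_0_lt_compat; lra.
    replace ((al + 2) * (zt 0 ^ 2 + xt 0 ^ 2) * / (al + 2)) with (zt 0 ^ 2 + xt 0 ^ 2) by (field; lra).
    exact HN0. }
  assert (Hsign : forall s, 0 < s < T -> h s < Lb -> dh s <= 0).
  { intros s Hs Hhs. unfold dh.
    assert (Hb : zt s ^ 2 + xt s ^ 2 < del ^ 2).
    { pose proof (HVlow (zt s) (xt s)). pose proof (HhV s ltac:(lra)). unfold Lb in Hhs.
      assert (k1 * (zt s ^ 2 + xt s ^ 2) < k1 * del ^ 2) by nra.
      apply Rmult_lt_reg_l in H2; auto. }
    assert (Hzs : Rabs (zt s) < del) by (apply sq_lt_abs; auto; nra).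
    assert (Hxs : Rabs (xt s) < del) by (apply sq_lt_abs; auto; nra).
    pose proof (Hdec _ _ Hzs Hxs). fold (V (zt s) (xt s)).
    pose proof (exp_pos (c * s)). nra. }
  assert (Hbar : forall t, 0 <= t < T -> h t < Lb).
  { apply barrier.
    - apply right_cont; auto.
    - intros s Hs. apply (deriv_cont_pt _ _ (dh s)). apply Hhd; auto.
    - auto.
    - intros s Hs Hbef.
      assert (forall s', 0 <= s' < s -> h s' <= h 0).
      { intros s' Hs'. apply (mono_right_neg h dh T Hrc Hhd s' ltac:(lra)).
        intros s'' Hs''. apply Hsign. lra. apply Hbef. lra. }
      assert (h s <= h 0).
      { apply left_le. lra. apply (deriv_cont_pt _ _ (dh s)). apply Hhd; auto. auto. }
      lra. }
  assert (Hmono : h t <= h 0).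
  { apply (mono_right_neg h dh T Hrc Hhd t Ht). intros s Hs. apply Hsign. lra. apply Hbar. lra. }
  apply le_of_sq.
  - apply nrm_pos.
  - apply Rmult_le_pos. apply Rmult_le_pos. apply sqrt_pos. left; apply exp_pos. apply nrm_pos.
  - rewrite nrm_sq.
    replace ((sqrt K0 * exp (- (c / 2) * t) * nrm (zt 0) (xt 0)) ^ 2)
      with ((sqrt K0) ^ 2 * (exp (- (c / 2) * t)) ^ 2 * nrm (zt 0) (xt 0) ^ 2) by ring.
    rewrite nrm_sq, pow2_sqrt by (unfold K0; left; apply Rdiv_lt_0_compat; lra).
    assert (Hex : exp (- (c / 2) * t) ^ 2 * exp (c * t) = 1).
    { replace (exp (- (c / 2) * t) ^ 2) with (exp (- (c / 2) * t) * exp (- (c / 2) * t)) by ring.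
      rewrite <- !exp_plus. rewrite <- exp_0. replace (- (c / 2) * t + - (c / 2) * t + c * t) with 0 by field. reflexivity. }
    pose proof (HVlow (zt t) (xt t)). pose proof (HhV t ltac:(lra)).
    pose proof (HVup (zt 0) (xt 0)). rewrite Hh0 in Hmono.
    unfold h in Hmono. fold (V (zt t) (xt t)) in Hmono.
    set (E := exp (- (c / 2) * t) ^ 2) in *. set (F := exp (c * t)) in *.
    assert (0 < F) by (unfold F; apply exp_pos). assert (0 < E) by (unfold E; apply pow_lt, exp_pos).
    assert (V (zt t) (xt t) <= V (zt 0) (xt 0) * E).
    { apply Rmult_le_reg_r with F; auto. replace (V (zt 0) (xt 0) * E * F) with (V (zt 0) (xt 0)) by nra. lra. }
    unfold K0. apply Rmult_le_reg_l with k1; auto.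
    replace (k1 * ((al + 2) / k1 * E * (zt 0 ^ 2 + xt 0 ^ 2))) with ((al + 2) * (zt 0 ^ 2 + xt 0 ^ 2) * E) by (field; lra).
    apply Rle_trans with (V (zt t) (xt t)); auto.
    apply Rle_trans with (V (zt 0) (xt 0) * E); auto.
    apply Rmult_le_compat_r; lra.
Qed.

Lemma cont_N (zt xt : R -> R) t : continuous zt t -> continuous xt t ->
  continuous (fun s => zt s * zt s + xt s * xt s) t.
Proof.
  intros Hz Hx. unfold continuous.
  apply (filterlim_comp_2 (fun s => zt s * zt s) (fun s => xt s * xt s) Rplus (G := locally (zt t * zt t)) (H := locally (xt t * xt t))).
  - apply (filterlim_comp_2 zt zt Rmult Hz Hz). exact (filterlim_mult (K:=R_AbsRing) (zt t) (zt t)).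
  - apply (filterlim_comp_2 xt xt Rmult Hx Hx). exact (filterlim_mult (K:=R_AbsRing) (xt t) (xt t)).
  - exact (filterlim_plus (V:=R_NormedModule) (zt t * zt t) (xt t * xt t)).
Qed.

Lemma cont_rc (f : R -> R) : continuous f 0 -> filterlim f (at_right 0) (locally (f 0)).
Proof. intros H. apply (filterlim_filter_le_1 _ at_right_le). exact H. Qed.

Lemma rc_id : filterlim (fun t : R => t) (at_right 0) (locally 0).
Proof. apply (filterlim_filter_le_1 _ at_right_le). apply filterlim_id. Qed.

Lemma GLip_mono G L1 L2 : 0 <= L2 -> GLip G L1 -> GLip G (L1 + L2).
Proof.
  intros H2 H a b a' b'. eapply Rle_trans. apply H.
  pose proof (Rabs_pos (a - a')). pose proof (Rabs_pos (b - b')). nra.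
Qed.

Lemma GLip_mono' G L1 L2 : 0 <= L1 -> GLip G L2 -> GLip G (L1 + L2).
Proof. intros. rewrite Rplus_comm. apply GLip_mono; auto. Qed.

Lemma unstable_part d Kz Kx k sigma l rho (S : R -> R) u :
  0 < d -> 0 < Kz -> 0 < Kx -> 0 < k -> 0 < sigma -> 0 < l -> 0 <= rho ->
  smooth S -> S 0 = 0 -> is_derive S 0 1 -> d < u ->
  unstable d u 0 Kz Kx k sigma l rho S.
Proof.
  intros Hd HKz HKx Hk Hsg Hl Hrho HS H0 Hd1 Hu Hstab.
  set (n := u - d). assert (Hn : 0 < n) by (unfold n; lra).
  set (be := Kz / n). assert (Hbe : be * n = Kz) by (unfold be; field; lra).
  assert (Hbe0 : 0 < be) by (unfold be; apply Rdiv_lt_0_compat; lra).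
  set (cz := n / (1 + Kz)). set (mu := cz * be / (cz + be)).
  assert (Hcz : 0 < cz) by (unfold cz; apply Rdiv_lt_0_compat; lra).
  assert (Hmu : 0 < mu) by (unfold mu; apply Rdiv_lt_0_compat; nra).
  set (eps := mu / (24 * (1 + be))).
  assert (Heps : 0 < eps) by (unfold eps; apply Rdiv_lt_0_compat; lra).
  destruct (remainder d u Kz Kx k sigma l rho S ltac:(lra) HKz HKx Hsg Hl Hrho H0 Hd1 eps Heps)
    as [del [Hdel [Hdel1 Hrem]]].
  set (cp := mu / 6). assert (Hcp : 0 < cp) by (unfold cp; lra).
  assert (Hgrow : forall z x, Rabs z < del -> Rabs x < del ->
     2 * (1 - be) * z * fz d u 0 Kz sigma S z x + (2 * be) * (fz d u 0 Kz sigma S z x * x + z * fx Kx k sigma l rho z x)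
     + 2 * (- be) * x * fx Kx k sigma l rho z x >= cp * (z * z + x * x)).
  { intros z x Hz Hx.
    set (r1 := fz d u 0 Kz sigma S z x - ((u - d - Kz) * z + Kz * x)).
    set (r2 := fx Kx k sigma l rho z x - (z - x)).
    pose proof (Hrem z x Hz Hx) as Hr. fold r1 r2 in Hr.
    pose proof (unst_point n Kz be eps z x r1 r2 Hn HKz Hbe ltac:(lra) ltac:(unfold eps, mu, cz; lra) Hr) as Hp.
    cbv zeta in Hp. fold cz mu in Hp.
    replace (fz d u 0 Kz sigma S z x) with (n * z + Kz * (x - z) + r1) by (unfold r1, n; ring).
    replace (fx Kx k sigma l rho z x) with (z - x + r2) by (unfold r2; ring).
    match goal with |- ?LHS >= _ =>
      assert (LHS = 2 * z * (n * z + Kz * (x - z) + r1) - 2 * be * (x - z) * ((z - x + r2) - (n * z + Kz * (x - z) + r1))) by ring end.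
    unfold cp. replace (z * z + x * x) with (z ^ 2 + x ^ 2) by ring. lra. }
  destruct (Hstab (del / 2) ltac:(lra)) as [Dl [HDl Hly]].
  destruct (LB2_global del _ ltac:(lra) (LB2_fz d u 0 Kz sigma S del Hsg ltac:(lra) HS)) as [L1 [M1 [HL1 [HM1 [HG1 HB1]]]]].
  destruct (LB2_global del _ ltac:(lra) (LB2_fx Kx k sigma l rho del Hsg ltac:(lra) ltac:(lra))) as [L2 [M2 [HL2 [HM2 [HG2 HB2]]]]].
  set (y0 := Rmin Dl del / 4).
  assert (Hy0 : 0 < y0) by (unfold y0; pose proof (Rmin_pos Dl del HDl Hdel); lra).
  assert (Hy0a : y0 <= Dl / 4) by (unfold y0; pose proof (Rmin_l Dl del); lra).
  assert (Hy0b : y0 <= del / 4) by (unfold y0; pose proof (Rmin_r Dl del); lra).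
  set (tstar := del ^ 2 / (cp * y0 ^ 2)).
  assert (Hts : 0 < tstar) by (unfold tstar; apply Rdiv_lt_0_compat; [nra | apply Rmult_lt_0_compat; nra]).
  set (Tend := tstar + 1).
  destruct (picard (fun a b => fz d u 0 Kz sigma S (clamp del a) (clamp del b))
                   (fun a b => fx Kx k sigma l rho (clamp del a) (clamp del b))
                   (L1 + L2) (M1 + M2) Tend y0 y0 ltac:(lra) ltac:(lra) ltac:(unfold Tend; lra)
                   (GLip_mono _ _ _ HL2 HG1) (GLip_mono' _ _ _ HL1 HG2)
                   ltac:(intros a b; pose proof (HB1 a b); lra) ltac:(intros a b; pose proof (HB2 a b); lra))
    as [zt [xt [Hz0 [Hx0 [Hcont Hder]]]]].
  set (Nf := fun s => zt s * zt s + xt s * xt s).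
  assert (HNc : forall s, continuous Nf s) by (intros s; apply cont_N; apply Hcont).
  assert (Hsmall : forall s, Nf s < del ^ 2 -> Rabs (zt s) < del /\ Rabs (xt s) < del).
  { intros s Hs. unfold Nf in Hs. split; apply sq_lt_abs; auto; nra. }
  assert (Hfield : forall s, Nf s < del ^ 2 ->
     fz d u 0 Kz sigma S (clamp del (zt s)) (clamp del (xt s)) = fz d u 0 Kz sigma S (zt s) (xt s) /\
     fx Kx k sigma l rho (clamp del (zt s)) (clamp del (xt s)) = fx Kx k sigma l rho (zt s) (xt s)).
  { intros s Hs. destruct (Hsmall s Hs). rewrite !clamp_id by lra. auto. }
  assert (Hnrm0 : nrm (zt 0) (xt 0) < Dl).
  { rewrite Hz0, Hx0. apply Rnot_le_lt. intros Hc.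
    pose proof (nrm_sq y0 y0) as Hq. pose proof (nrm_pos y0 y0).
    assert (Dl ^ 2 <= nrm y0 y0 ^ 2) by nra. nra. }
  assert (Hsol : forall t, 0 < t <= Tend -> (forall s, 0 <= s < t -> Nf s < del ^ 2) ->
     is_sol d u 0 Kz Kx k sigma l rho S t zt xt).
  { intros t Ht Hb. split; [apply cont_rc, Hcont|]. split; [apply cont_rc, Hcont|].
    intros s Hs. destruct (Hder s ltac:(lra)) as [D1 D2]. destruct (Hfield s (Hb s ltac:(lra))) as [F1 F2].
    rewrite F1 in D1. rewrite F2 in D2. auto. }
  assert (Hbar : forall t, 0 <= t < Tend -> Nf t < del ^ 2).
  { apply barrier.
    - apply right_cont. apply cont_rc. apply HNc.
    - intros s Hs. apply continuity_pt_filterlim. apply HNc.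
    - unfold Nf. rewrite Hz0, Hx0. nra.
    - intros t Ht Hb.
      pose proof (Hly t zt xt (Hsol t ltac:(lra) Hb) Hnrm0) as Hl2.
      assert (Nf t <= (del / 2) ^ 2).
      { apply left_le. lra. apply continuity_pt_filterlim. apply HNc.
        intros s Hs. pose proof (Hl2 s Hs). pose proof (nrm_sq (zt s) (xt s)).
        pose proof (nrm_pos (zt s) (xt s)). unfold Nf.
        assert (nrm (zt s) (xt s) ^ 2 <= (del / 2) ^ 2) by nra. nra. }
      nra. }
  set (Wf := fun t => ((1 - be) * zt t * zt t + (2 * be) * zt t * xt t + (- be) * xt t * xt t) * exp (0 * t)).
  set (dWf := fun t => (2 * (1 - be) * zt t * fz d u 0 Kz sigma S (zt t) (xt t)
        + (2 * be) * (fz d u 0 Kz sigma S (zt t) (xt t) * xt t + zt t * fx Kx k sigma l rho (zt t) (xt t))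
        + 2 * (- be) * xt t * fx Kx k sigma l rho (zt t) (xt t)
        + 0 * ((1 - be) * zt t * zt t + (2 * be) * zt t * xt t + (- be) * xt t * xt t)) * exp (0 * t)).
  assert (Hsol2 : is_sol d u 0 Kz Kx k sigma l rho S Tend zt xt).
  { apply Hsol. unfold Tend; lra. intros s Hs. apply Hbar. lra. }
  destruct Hsol2 as [Rz [Rx Dall]].
  assert (HWd : forall s, 0 < s < Tend -> is_derive Wf s (dWf s)).
  { intros s Hs. destruct (Dall s Hs) as [D1 D2].
    exact (d_quad_exp (1 - be) (2 * be) (- be) 0 zt xt s _ _ D1 D2). }
  assert (HWrc : filterlim Wf (at_right 0) (locally (Wf 0))).
  { exact (rc_quad_exp (1 - be) (2 * be) (- be) 0 zt xt Rz Rx). }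
  assert (HWeq : forall s, Wf s = zt s ^ 2 - be * (xt s - zt s) ^ 2).
  { intros s. unfold Wf. rewrite Rmult_0_l, exp_0. ring. }
  assert (HdW : forall s, 0 < s < Tend -> dWf s >= cp * Nf s).
  { intros s Hs. unfold dWf. rewrite !Rmult_0_l, exp_0, Rmult_1_r, Rplus_0_r.
    destruct (Hsmall s (Hbar s ltac:(lra))) as [A1 A2].
    exact (Hgrow _ _ A1 A2). }
  assert (HNW : forall s, Wf s <= Nf s).
  { intros s. rewrite HWeq. unfold Nf. pose proof (pow2_ge_0 (xt s - zt s)). nra. }
  assert (HW0 : Wf 0 = y0 ^ 2) by (rewrite HWeq, Hz0, Hx0; ring).
  assert (Hstep1 : forall t, 0 <= t < Tend -> Wf 0 <= Wf t).
  { intros t Ht. apply (mono_right Wf dWf Tend HWrc HWd t Ht).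
    intros s Hs. pose proof (HdW s ltac:(lra)). assert (0 <= Nf s) by (unfold Nf; nra). nra. }
  set (kf := fun t => Wf t + (- (cp * y0 ^ 2)) * t).
  set (dkf := fun t => dWf t + (0 * t + (- (cp * y0 ^ 2)) * 1)).
  assert (Hkd : forall s, 0 < s < Tend -> is_derive kf s (dkf s)).
  { intros s Hs. unfold kf, dkf. apply d_plus. apply HWd; auto.
    apply (d_mult (fun _ => - (cp * y0 ^ 2)) (fun t => t)). apply d_const. apply (is_derive_id (K:=R_AbsRing)). }
  assert (Hkrc : filterlim kf (at_right 0) (locally (kf 0))).
  { unfold kf. apply rc_plus. exact HWrc. apply rc_mult. apply rc_const. apply rc_id. }
  assert (Hkk : kf 0 <= kf tstar).
  { apply (mono_right kf dkf Tend Hkrc Hkd tstar ltac:(unfold Tend; lra)).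
    intros s Hs. unfold dkf. pose proof (HdW s ltac:(unfold Tend in *; lra)).
    pose proof (Hstep1 s ltac:(unfold Tend in *; lra)). pose proof (HNW s). rewrite HW0 in *. nra. }
  unfold kf in Hkk. rewrite HW0 in Hkk.
  pose proof (HNW tstar). pose proof (Hbar tstar ltac:(unfold Tend; lra)).
  assert (cp * y0 ^ 2 * tstar = del ^ 2) by (unfold tstar; field; nra).
  nra.
Qed.

Theorem lemma1 (d Kz Kx k sigma l rho : R) (S : R -> R)
  (hd : 0 < d) (hKz : 0 < Kz) (hKx : 0 < Kx) (hk : 0 < k)
  (hsigma : 0 < sigma) (hl : 0 < l) (hrho : 0 <= rho)
  (hS_smooth : smooth S) (hS_odd : odd_fun S) (hS_sat : saturating S)
  (hS0 : S 0 = 0) (hS'0 : is_derive S 0 1) :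
  let ustar := d in
  (forall u, 0 < u < ustar -> loc_exp_stable d u 0 Kz Kx k sigma l rho S) /\
  (forall u, ustar < u -> unstable d u 0 Kz Kx k sigma l rho S).
Proof.
  intros ustar. split.
  - intros u Hu. apply stable_part; auto.
  - intros u Hu. apply unstable_part; auto.
Qed.
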